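(* Let $M_d$ denote the algebra of complex $d\times d$ matrices and $id$ the identity map on $M_d$. Let $L:M_d\to M_d$ be given by $$L a = i[h,a] + F a - \tfrac12\{F(\mathbf{1}_d),a\},$$ where $h=h^*\in M_d$ and $F:M_d\to M_d$ is a completely positive linear map. For $t\ge 0$ let $L_t:M_d\to M_d$ be linear maps of the form $L_t = B_t + Z_t$, where $B_t:M_d\to M_d$ is completely positive for every $t\ge0$ and $$Z_t a = -\tfrac12\{B_t(\mathbf{1}_d),a\} + i[h_t,a],\qquad h_t = h_t^*\in M_d .$$ Let $A_t$, $t\ge0$, be the solution of $$\frac{dA_t}{dt} = L A_t + \int_0^t ds\, L_{t-s}A_s,\qquad A_0=id.$$ Let $N_t$, $t\ge 0$, be the solution of the normalization equation $$\frac{dN_t}{dt} = L N_t + \int_0^t ds\, Z_{t-s} N_s,\qquad N_0 = id.$$ If $N_t$ is completely positive for all $t\ge 0$, then $A_t$ is completely positive for all $t\ge0$.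
   Context: $\{a,b\}=ab+ba$ denotes the anticommutator and $[a,b]=ab-ba$ the commutator; $\mathbf{1}_d$ is the identity matrix. Products of maps such as $L A_t$ denote composition of linear maps on $M_d$. A linear map $\Phi:M_d\to M_d$ is completely positive if $\Phi\otimes id_{M_n}$ is positive for every $n$. *)

(* Defs.v *)
From Stdlib Require Import Reals.
From Coquelicot Require Import Coquelicot.
From mathcomp Require Import ssreflect ssrfun ssrbool eqtype ssrnat seq fintype bigop.

Open Scope R_scope.

Definition Mat (d : nat) := 'I_d -> 'I_d -> C.

Definition csum (n : nat) (f : 'I_n -> C) : C := \big[Cplus/RtoC 0]_(i < n) f i.

Definition madd {d} (a b : Mat d) : Mat d := fun i j => Cplus (a i j) (b i j).
Definition mscale {d} (c : C) (a : Mat d) : Mat d := fun i j => Cmult c (a i j).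
Definition mmul {d} (a b : Mat d) : Mat d :=
  fun i j => csum d (fun k => Cmult (a i k) (b k j)).
Definition madj {d} (a : Mat d) : Mat d := fun i j => Cconj (a j i).
Definition mid (d : nat) : Mat d :=
  fun i j => if i == j then RtoC 1 else RtoC 0.

Definition comm {d} (a b : Mat d) : Mat d :=
  madd (mmul a b) (mscale (RtoC (-1)) (mmul b a)).
Definition anticomm {d} (a b : Mat d) : Mat d := madd (mmul a b) (mmul b a).

Definition hermitian {d} (h : Mat d) : Prop := madj h = h.

Definition is_linear_map {d} (Phi : Mat d -> Mat d) : Prop :=
  (forall a b, Phi (madd a b) = madd (Phi a) (Phi b)) /\
  (forall (c : C) a, Phi (mscale c a) = mscale c (Phi a)).

(* An element X of M_d (x) M_n, identified with M_n(M_d): X i j is the (i,j)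
   block; entry X i j k l sits in row (i,k), column (j,l). *)
Definition psd_block (d n : nat) (X : 'I_n -> 'I_n -> Mat d) : Prop :=
  forall v : 'I_n -> 'I_d -> C,
    let q := csum n (fun i => csum n (fun j => csum d (fun k => csum d (fun l =>
               Cmult (Cmult (Cconj (v i k)) (X i j k l)) (v j l))))) in
    Im q = 0 /\ 0 <= Re q.

Definition ampl {d} (n : nat) (Phi : Mat d -> Mat d) (X : 'I_n -> 'I_n -> Mat d)
  : 'I_n -> 'I_n -> Mat d := fun i j => Phi (X i j).

Definition CP {d} (Phi : Mat d -> Mat d) : Prop :=
  is_linear_map Phi /\
  forall (n : nat) (X : 'I_n -> 'I_n -> Mat d),
    psd_block d n X -> psd_block d n (ampl n Phi X).

Definition Lgen {d} (h : Mat d) (F : Mat d -> Mat d) (a : Mat d) : Mat d :=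
  madd (mscale Ci (comm h a))
       (madd (F a) (mscale (RtoC (-1/2)) (anticomm (F (mid d)) a))).

Definition Zgen {d} (h' : Mat d) (B : Mat d -> Mat d) (a : Mat d) : Mat d :=
  madd (mscale (RtoC (-1/2)) (anticomm (B (mid d)) a)) (mscale Ci (comm h' a)).

Definition cont_nonneg (f : R -> C) : Prop :=
  (forall t, 0 < t -> continuous f t) /\
  filterlim f (at_right 0) (locally (f 0)).

Definition is_solution {d} (K0 : Mat d -> Mat d) (K : R -> Mat d -> Mat d)
  (X : R -> Mat d -> Mat d) : Prop :=
  X 0 = (fun a => a) /\
  (forall a i j, cont_nonneg (fun t => X t a i j)) /\
  (forall t, 0 < t -> forall a i j,
     is_derive (K := R_AbsRing) (V := C_R_NormedModule)
       (fun s => X s a i j) t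
       (Cplus (K0 (X t a) i j)
              (RInt (V := C_R_CompleteNormedModule)
                    (fun s => K (t - s) (X s a) i j) 0 t))).

(* Main.v *)
Require Import Defs.
From Stdlib Require Import Reals Lra Lia FunctionalExtensionality Factorial.
From Coquelicot Require Import Coquelicot.
From HB Require Import structures.
From mathcomp Require Import ssreflect ssrfun ssrbool eqtype ssrnat seq fintype bigop.
Open Scope R_scope.
Set Implicit Arguments. Unset Strict Implicit.

HB.instance Definition _ := Monoid.isComLaw.Build C (RtoC 0) Cplus Cplus_assoc Cplus_comm Cplus_0_l.

Lemma csum_plus n (f g : 'I_n -> C) : csum n (fun i => Cplus (f i) (g i)) = Cplus (csum n f) (csum n g).
Proof. by rewrite /csum big_split. Qed.

Lemma csum_morph n (g : C -> C) (f : 'I_n -> C) :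
  (forall x y, g (Cplus x y) = Cplus (g x) (g y)) -> g (RtoC 0) = RtoC 0 ->
  g (csum n f) = csum n (fun i => g (f i)).
Proof. move=> Hp H0. rewrite /csum. by apply: (big_morph g Hp H0). Qed.

Lemma csum_ext n (f g : 'I_n -> C) : (forall i, f i = g i) -> csum n f = csum n g.
Proof. move=> H; rewrite /csum; apply: eq_bigr => i _; exact: H. Qed.

Lemma csum_exchange n m (F : 'I_n -> 'I_m -> C) :
  csum n (fun i => csum m (fun j => F i j)) = csum m (fun j => csum n (fun i => F i j)).
Proof. rewrite /csum. exact: exchange_big. Qed.

Lemma csum_zero n : csum n (fun _ => RtoC 0) = RtoC 0.
Proof. rewrite /csum. by rewrite big1. Qed.

Lemma csum_multl n c (f : 'I_n -> C) : Cmult c (csum n f) = csum n (fun i => Cmult c (f i)).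
Proof. apply: (@csum_morph n (fun x => Cmult c x) f) => [x y|]; ring. Qed.

Lemma csum_delta n (i : 'I_n) (f : 'I_n -> C) :
  csum n (fun k => if k == i then f k else RtoC 0) = f i.
Proof.
rewrite /csum (bigD1 i) //= eqxx big1 ?Cplus_0_r // => k /negbTE -> //.
Qed.

Definition mzero d : Mat d := fun _ _ => RtoC 0.
Arguments mzero : clear implicits.
Lemma mat_ext d (a b : Mat d) : (forall i j, a i j = b i j) -> a = b.
Proof. move=> H. apply: functional_extensionality => i. apply: functional_extensionality => j. exact: H. Qed.

Section MatMon.
Variable d : nat.
Lemma madd_assoc : associative (@madd d).
Proof. move=> a b c; apply: mat_ext => i j; rewrite /madd; ring. Qed.
Lemma madd_comm : commutative (@madd d).
Proof. move=> a b; apply: mat_ext => i j; rewrite /madd; ring. Qed.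
Lemma madd0m : left_id (mzero d) (@madd d).
Proof. move=> a; apply: mat_ext => i j; rewrite /madd /mzero; ring. Qed.
End MatMon.

HB.instance Definition _ d := Monoid.isComLaw.Build (Mat d) (mzero d) (@madd d) (@madd_assoc d) (@madd_comm d) (@madd0m d).

Definition msum d n (f : 'I_n -> Mat d) : Mat d := \big[@madd d/mzero d]_(k < n) f k.

Lemma msum_entry d n (f : 'I_n -> Mat d) i j : msum f i j = csum n (fun k => f k i j).
Proof.
rewrite /msum /csum. apply: (big_morph (fun M : Mat d => M i j)) => //.
Qed.

Definition Ebas d (k l : 'I_d) : Mat d := fun i j => if (i == k) && (j == l) then RtoC 1 else RtoC 0.

Lemma mat_expand d (x : Mat d) :
  x = msum (fun k => msum (fun l => mscale (x k l) (Ebas k l))).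
Proof.
apply: mat_ext => i j. rewrite msum_entry.
rewrite -(csum_delta i (fun k => x k j)).
apply: csum_ext => k. rewrite msum_entry.
rewrite -(csum_delta j (fun l => if k == i then x k l else RtoC 0)).
apply: csum_ext => l. rewrite /mscale /Ebas.
rewrite (eq_sym i k) (eq_sym j l).
case: (k == i); case: (l == j) => /=; ring.
Qed.

Lemma lin_zero d (Phi : Mat d -> Mat d) : is_linear_map Phi -> Phi (mzero d) = mzero d.
Proof.
move=> [_ Hs]. have -> : mzero d = mscale (RtoC 0) (mzero d).
  apply: mat_ext => i j; rewrite /mscale /mzero; ring.
rewrite Hs. apply: mat_ext => i j; rewrite /mscale /mzero; ring.
Qed.

Lemma lin_msum d n (Phi : Mat d -> Mat d) (f : 'I_n -> Mat d) : is_linear_map Phi ->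
  Phi (msum f) = msum (fun k => Phi (f k)).
Proof.
move=> HL. rewrite /msum. apply: (big_morph Phi).
- move=> x y; by case: HL => Ha _; rewrite Ha.
- exact: lin_zero.
Qed.

Lemma lin_expand d (Phi : Mat d -> Mat d) (x : Mat d) i j : is_linear_map Phi ->
  Phi x i j = csum d (fun k => csum d (fun l => Cmult (x k l) (Phi (Ebas k l) i j))).
Proof.
move=> HL. rewrite {1}(mat_expand x) lin_msum // msum_entry.
apply: csum_ext => k. rewrite lin_msum // msum_entry.
apply: csum_ext => l. case: HL => _ Hs. by rewrite Hs.
Qed.

Lemma mmul_addr d (a b c : Mat d) : mmul a (madd b c) = madd (mmul a b) (mmul a c).
Proof.
apply: mat_ext => i j. rewrite /mmul /madd -csum_plus. apply: csum_ext => k; ring.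
Qed.
Lemma mmul_addl d (a b c : Mat d) : mmul (madd a b) c = madd (mmul a c) (mmul b c).
Proof.
apply: mat_ext => i j. rewrite /mmul /madd -csum_plus. apply: csum_ext => k; ring.
Qed.
Lemma mmul_scalr d c (a b : Mat d) : mmul a (mscale c b) = mscale c (mmul a b).
Proof.
apply: mat_ext => i j. rewrite /mmul /mscale csum_multl. apply: csum_ext => k; ring.
Qed.
Lemma mmul_scall d c (a b : Mat d) : mmul (mscale c a) b = mscale c (mmul a b).
Proof.
apply: mat_ext => i j. rewrite /mmul /mscale csum_multl. apply: csum_ext => k; ring.
Qed.

Lemma comm_lin d (h : Mat d) : is_linear_map (comm h).
Proof.
split.
- move=> a b. rewrite /comm mmul_addr mmul_addl. apply: mat_ext => i j. rewrite /madd /mscale. ring.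
- move=> c a. rewrite /comm mmul_scalr mmul_scall. apply: mat_ext => i j. rewrite /madd /mscale. ring.
Qed.

Lemma anticomm_lin d (h : Mat d) : is_linear_map (anticomm h).
Proof.
split.
- move=> a b. rewrite /anticomm mmul_addr mmul_addl. apply: mat_ext => i j. rewrite /madd. ring.
- move=> c a. rewrite /anticomm mmul_scalr mmul_scall. apply: mat_ext => i j. rewrite /madd /mscale. ring.
Qed.

Lemma Lgen_lin d (h : Mat d) F : is_linear_map F -> is_linear_map (Lgen h F).
Proof.
move=> [Fa Fs]. case: (comm_lin h) => Ca Cs. case: (anticomm_lin (F (mid d))) => Aa As.
split.
- move=> a b. rewrite /Lgen Fa Ca Aa. apply: mat_ext => i j. rewrite /madd /mscale. ring.
- move=> c a. rewrite /Lgen Fs Cs As. apply: mat_ext => i j. rewrite /madd /mscale. ring.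
Qed.

Lemma Zgen_lin d (h : Mat d) F : is_linear_map (Zgen h F).
Proof.
case: (comm_lin h) => Ca Cs. case: (anticomm_lin (F (mid d))) => Aa As.
split.
- move=> a b. rewrite /Zgen Ca Aa. apply: mat_ext => i j. rewrite /madd /mscale. ring.
- move=> c a. rewrite /Zgen Cs As. apply: mat_ext => i j. rewrite /madd /mscale. ring.
Qed.

Lemma add_lin d (P Q : Mat d -> Mat d) : is_linear_map P -> is_linear_map Q ->
  is_linear_map (fun a => madd (P a) (Q a)).
Proof.
move=> [Pa Ps] [Qa Qs]. split.
- move=> a b. rewrite Pa Qa. apply: mat_ext => i j. rewrite /madd. ring.
- move=> c a. rewrite Ps Qs. apply: mat_ext => i j. rewrite /madd /mscale. ring.
Qed.

Definition cint (f : R -> C) a b : C := RInt (V := C_R_CompleteNormedModule) f a b.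
Definition cex (f : R -> C) a b : Prop := ex_RInt (V := C_R_NormedModule) f a b.
Definition cis (f : R -> C) a b (l : C) : Prop := is_RInt (V := C_R_NormedModule) f a b l.

Lemma cis_cint f a b l : cis f a b l -> cint f a b = l.
Proof. move=> H. exact: (is_RInt_unique (V:=C_R_CompleteNormedModule)). Qed.
Lemma cex_cis f a b : cex f a b -> cis f a b (cint f a b).
Proof. move=> H. exact: (RInt_correct (V:=C_R_CompleteNormedModule)). Qed.

Lemma cis_plus f g a b lf lg : cis f a b lf -> cis g a b lg ->
  cis (fun s => Cplus (f s) (g s)) a b (Cplus lf lg).
Proof. move=> Hf Hg. exact: (is_RInt_plus (V:=C_R_NormedModule) _ _ _ _ _ _ Hf Hg). Qed.

Lemma cis_cmul c f a b l : cis f a b l -> cis (fun s => Cmult c (f s)) a b (Cmult c l).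
Proof.
move=> H.
have H1 := is_RInt_fct_extend_fst _ _ _ _ H.
have H2 := is_RInt_fct_extend_snd _ _ _ _ H.
case: c => cr ci.
have E : Cmult (cr, ci) l = (cr * fst l - ci * snd l, cr * snd l + ci * fst l) by [].
rewrite E.
have Ef : (fun s => Cmult (cr, ci) (f s)) = (fun s => (cr * fst (f s) - ci * snd (f s), cr * snd (f s) + ci * fst (f s))) by [].
rewrite Ef.
apply: (is_RInt_fct_extend_pair (U:=R_NormedModule) (V:=R_NormedModule)) => /=.
- apply: (is_RInt_minus (V:=R_NormedModule)); apply: (is_RInt_scal (V:=R_NormedModule)); assumption.
- apply: (is_RInt_plus (V:=R_NormedModule)); apply: (is_RInt_scal (V:=R_NormedModule)); assumption.
Qed.

Lemma cex_plus f g a b : cex f a b -> cex g a b -> cex (fun s => Cplus (f s) (g s)) a b.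
Proof. move=> /cex_cis Hf /cex_cis Hg. eexists; exact: cis_plus Hf Hg. Qed.
Lemma cint_plus f g a b : cex f a b -> cex g a b ->
  cint (fun s => Cplus (f s) (g s)) a b = Cplus (cint f a b) (cint g a b).
Proof. move=> /cex_cis Hf /cex_cis Hg. apply: cis_cint. exact: cis_plus. Qed.
Lemma cex_cmul c f a b : cex f a b -> cex (fun s => Cmult c (f s)) a b.
Proof. move=> /cex_cis Hf. eexists; exact: cis_cmul Hf. Qed.
Lemma cint_cmul c f a b : cex f a b -> cint (fun s => Cmult c (f s)) a b = Cmult c (cint f a b).
Proof. move=> /cex_cis Hf. apply: cis_cint. exact: cis_cmul. Qed.
Lemma cex_cmulr c f a b : cex f a b -> cex (fun s => Cmult (f s) c) a b.
Proof. move=> H. have := cex_cmul c H. apply: ex_RInt_ext => x _. exact: Cmult_comm. Qed.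

Lemma cint_ext f g a b : (forall x, Rmin a b < x < Rmax a b -> f x = g x) -> cint f a b = cint g a b.
Proof. move=> H. exact: (RInt_ext (V:=C_R_CompleteNormedModule)). Qed.
Lemma cex_ext f g a b : (forall x, Rmin a b < x < Rmax a b -> f x = g x) -> cex f a b -> cex g a b.
Proof. move=> H. exact: (ex_RInt_ext (V:=C_R_NormedModule)). Qed.

Lemma cis_zero a b : cis (fun _ => RtoC 0) a b (RtoC 0).
Proof.
have := is_RInt_const (V:=C_R_NormedModule) a b (RtoC 0).
have -> : scal (b - a) (RtoC 0) = RtoC 0.
  rewrite scal_R_Cmult. by rewrite Cmult_0_r.
done.
Qed.

Lemma cis_csum n (f : 'I_n -> R -> C) (l : 'I_n -> C) a b :
  (forall k, cis (f k) a b (l k)) -> cis (fun s => csum n (fun k => f k s)) a b (csum n l).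
Proof.
move=> H. rewrite /csum.
pose P := fun (g : R -> C) (v : C) => cis g a b v.
have : P (fun s => \big[Cplus/RtoC 0]_(k < n) f k s) (\big[Cplus/RtoC 0]_(k < n) l k).
  elim: (index_enum _) => [|k r IH].
  - rewrite /P. have -> : (fun s => \big[Cplus/RtoC 0]_(k <- [::]) f k s) = (fun _ => RtoC 0).
      apply: functional_extensionality => s; by rewrite big_nil.
    rewrite big_nil. exact: cis_zero.
  - rewrite /P. have -> : (fun s => \big[Cplus/RtoC 0]_(j <- k :: r) f j s) = (fun s => Cplus (f k s) (\big[Cplus/RtoC 0]_(j <- r) f j s)).
      apply: functional_extensionality => s; by rewrite big_cons.
    rewrite big_cons. apply: cis_plus; [exact: H | exact: IH].
done.
Qed.

Lemma cex_csum n (f : 'I_n -> R -> C) a b :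
  (forall k, cex (f k) a b) -> cex (fun s => csum n (fun k => f k s)) a b.
Proof. move=> H. eexists. apply: cis_csum => k. exact: cex_cis (H k). Qed.
Lemma cint_csum n (f : 'I_n -> R -> C) a b :
  (forall k, cex (f k) a b) -> cint (fun s => csum n (fun k => f k s)) a b = csum n (fun k => cint (f k) a b).
Proof. move=> H. apply: cis_cint. apply: cis_csum => k. exact: cex_cis (H k). Qed.

Lemma re_cint f a b : cex f a b -> Re (cint f a b) = RInt (fun s => Re (f s)) a b.
Proof.
move=> /cex_cis H. have := is_RInt_fct_extend_fst _ _ _ _ H. move=> H1.
symmetry. exact: (is_RInt_unique _ _ _ _ H1).
Qed.
Lemma im_cint f a b : cex f a b -> Im (cint f a b) = RInt (fun s => Im (f s)) a b.
Proof.
move=> /cex_cis H. have := is_RInt_fct_extend_snd _ _ _ _ H. move=> H1.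
symmetry. exact: (is_RInt_unique _ _ _ _ H1).
Qed.
Lemma ex_re f a b : cex f a b -> ex_RInt (fun s => Re (f s)) a b.
Proof. move=> H. exact: (ex_RInt_fct_extend_fst _ _ _ H). Qed.
Lemma ex_im f a b : cex f a b -> ex_RInt (fun s => Im (f s)) a b.
Proof. move=> H. exact: (ex_RInt_fct_extend_snd _ _ _ H). Qed.

Definition mint d (f : R -> Mat d) a b : Mat d := fun i j => cint (fun s => f s i j) a b.
Definition mex d (f : R -> Mat d) a b : Prop := forall i j, cex (fun s => f s i j) a b.

Lemma lin_mint d (Phi : Mat d -> Mat d) (f : R -> Mat d) a b :
  is_linear_map Phi -> mex f a b -> Phi (mint f a b) = mint (fun s => Phi (f s)) a b.
Proof.
move=> HL Hf. apply: mat_ext => i j. rewrite lin_expand //.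
rewrite /mint.
rewrite (cint_ext (g := fun s => csum d (fun k => csum d (fun l => Cmult (f s k l) (Phi (Ebas k l) i j))))); last first.
  move=> x _. exact: lin_expand.
rewrite cint_csum; last first.
  move=> k. apply: cex_csum => l. exact: cex_cmulr.
apply: csum_ext => k. rewrite cint_csum; last first.
  move=> l. exact: cex_cmulr.
apply: csum_ext => l.
rewrite Cmult_comm -cint_cmul //. apply: cint_ext => x _. exact: Cmult_comm.
Qed.

Lemma lin_mex d (Phi : Mat d -> Mat d) (f : R -> Mat d) a b :
  is_linear_map Phi -> mex f a b -> mex (fun s => Phi (f s)) a b.
Proof.
move=> HL Hf i j.
apply: (cex_ext (f := fun s => csum d (fun k => csum d (fun l => Cmult (f s k l) (Phi (Ebas k l) i j))))).
  move=> x _. symmetry. exact: lin_expand.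
apply: cex_csum => k. apply: cex_csum => l. exact: cex_cmulr.
Qed.

Lemma mint_add d (f g : R -> Mat d) a b : mex f a b -> mex g a b ->
  mint (fun s => madd (f s) (g s)) a b = madd (mint f a b) (mint g a b).
Proof. move=> Hf Hg. apply: mat_ext => i j. rewrite /mint /madd. exact: cint_plus. Qed.
Lemma mex_add d (f g : R -> Mat d) a b : mex f a b -> mex g a b -> mex (fun s => madd (f s) (g s)) a b.
Proof. move=> Hf Hg i j. exact: cex_plus. Qed.

Lemma Cmod_le_reim (c : C) : Cmod c <= Rabs (Re c) + Rabs (Im c).
Proof.
rewrite /Cmod. have H0 : 0 <= Rabs (Re c) + Rabs (Im c) by have := Rabs_pos (Re c); have := Rabs_pos (Im c); lra.
rewrite -(sqrt_pow2 _ H0). apply: sqrt_le_1_alt.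
have E1 : (fst c ^ 2) = Rabs (Re c) ^ 2 by rewrite /Re; rewrite pow2_abs.
have E2 : (snd c ^ 2) = Rabs (Im c) ^ 2 by rewrite /Im; rewrite pow2_abs.
rewrite E1 E2. have := Rabs_pos (Re c); have := Rabs_pos (Im c). nra.
Qed.

Lemma im_le_Cmod (c : C) : Rabs (Im c) <= Cmod c.
Proof. have := Rmax_Cmod c. have := Rmax_r (Rabs (fst c)) (Rabs (snd c)). rewrite /Im. lra. Qed.

Definition ccont (f : R -> C) := forall x, continuity_pt (fun t => Re (f t)) x /\ continuity_pt (fun t => Im (f t)) x.

Lemma ccont_const c : ccont (fun _ => c).
Proof. move=> x; split; apply: continuity_pt_const => ? ?; done. Qed.

Lemma ccont_plus f g : ccont f -> ccont g -> ccont (fun t => Cplus (f t) (g t)).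
Proof.
move=> Hf Hg x. case: (Hf x) => f1 f2. case: (Hg x) => g1 g2. split.
- exact: (continuity_pt_plus _ _ _ f1 g1).
- exact: (continuity_pt_plus _ _ _ f2 g2).
Qed.

Lemma ccont_mult f g : ccont f -> ccont g -> ccont (fun t => Cmult (f t) (g t)).
Proof.
move=> Hf Hg x. case: (Hf x) => f1 f2. case: (Hg x) => g1 g2. split.
- have -> : (fun t => Re (Cmult (f t) (g t))) = (fun t => Re (f t) * Re (g t) - Im (f t) * Im (g t)).
    apply: functional_extensionality => t; exact: re_mult.
  apply: (continuity_pt_minus (fun t => Re (f t) * Re (g t)) (fun t => Im (f t) * Im (g t))).
  exact: (continuity_pt_mult _ _ _ f1 g1). exact: (continuity_pt_mult _ _ _ f2 g2).
- have -> : (fun t => Im (Cmult (f t) (g t))) = (fun t => Re (f t) * Im (g t) + Im (f t) * Re (g t)).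
    apply: functional_extensionality => t; exact: im_mult.
  apply: (continuity_pt_plus (fun t => Re (f t) * Im (g t)) (fun t => Im (f t) * Re (g t))).
  exact: (continuity_pt_mult _ _ _ f1 g2). exact: (continuity_pt_mult _ _ _ f2 g1).
Qed.

Lemma ccont_minus f g : ccont f -> ccont g -> ccont (fun t => Cminus (f t) (g t)).
Proof.
move=> Hf Hg. have -> : (fun t => Cminus (f t) (g t)) = (fun t => Cplus (f t) (Cmult (RtoC (-1)) (g t))).
  apply: functional_extensionality => t. rewrite /Cminus. ring.
apply: ccont_plus => //. apply: ccont_mult => //. exact: ccont_const.
Qed.

Lemma ccont_comp f (phi : R -> R) : ccont f -> (forall x, continuity_pt phi x) -> ccont (fun t => f (phi t)).
Proof.
move=> Hf Hp x. case: (Hf (phi x)) => f1 f2. split.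
- exact: (continuity_pt_comp phi (fun t => Re (f t)) x (Hp x) f1).
- exact: (continuity_pt_comp phi (fun t => Im (f t)) x (Hp x) f2).
Qed.

Lemma cpt_lin (a b : R) x : continuity_pt (fun t => a * t + b) x.
Proof.
apply: (continuity_pt_plus (fun t => a * t) (fun _ => b)).
apply: (continuity_pt_mult (fun _ => a) (fun t => t)).
apply: continuity_pt_const => ? ?; done. exact: continuity_pt_id.
apply: continuity_pt_const => ? ?; done.
Qed.

Lemma ccont_sub_arg f c : ccont f -> ccont (fun t => f (c - t)).
Proof.
move=> Hf. have -> : (fun t => f (c - t)) = (fun t => f ((-1) * t + c)).
  apply: functional_extensionality => t. f_equal. ring.
apply: ccont_comp => // x. exact: cpt_lin.
Qed.
Lemma ccont_shift_arg f c : ccont f -> ccont (fun t => f (t - c)).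
Proof.
move=> Hf. have -> : (fun t => f (t - c)) = (fun t => f (1 * t + - c)).
  apply: functional_extensionality => t. f_equal. ring.
apply: ccont_comp => // x. exact: cpt_lin.
Qed.

Lemma ccont_csum n (f : 'I_n -> R -> C) : (forall k, ccont (f k)) -> ccont (fun t => csum n (fun k => f k t)).
Proof.
move=> H. rewrite /csum.
elim: (index_enum _) => [|k r IH].
- have -> : (fun t => \big[Cplus/RtoC 0]_(k <- [::]) f k t) = (fun _ => RtoC 0).
    apply: functional_extensionality => s; by rewrite big_nil.
  exact: ccont_const.
- have -> : (fun t => \big[Cplus/RtoC 0]_(j <- k :: r) f j t) = (fun t => Cplus (f k t) (\big[Cplus/RtoC 0]_(j <- r) f j t)).
    apply: functional_extensionality => s; by rewrite big_cons.
  apply: ccont_plus; [exact: H | exact: IH].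
Qed.

Lemma ccont_cex f a b : ccont f -> cex f a b.
Proof.
move=> Hf. rewrite /cex.
have -> : f = (fun t => (fst (f t), snd (f t))) by apply: functional_extensionality => t; case: (f t).
apply: (ex_RInt_fct_extend_pair (U:=R_NormedModule) (V:=R_NormedModule)) => /=.
- apply: ex_RInt_continuous => z _. apply/continuity_pt_filterlim. exact: (proj1 (Hf z)).
- apply: ex_RInt_continuous => z _. apply/continuity_pt_filterlim. exact: (proj2 (Hf z)).
Qed.

Lemma ccont_bound f a b : ccont f -> exists M, 0 <= M /\ forall x, a <= x <= b -> Cmod (f x) <= M.
Proof.
move=> Hf. case: (Rle_lt_dec a b) => Hab; last first.
  exists 0; split; [lra| move=> x Hx; lra].
have c1 : forall c, a <= c <= b -> continuity_pt (fun t => Rabs (Re (f t)) + Rabs (Im (f t))) c.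
  move=> c _. apply: (continuity_pt_plus (fun t => Rabs (Re (f t))) (fun t => Rabs (Im (f t)))).
  - apply: (continuity_pt_comp (fun t => Re (f t)) Rabs). exact: (proj1 (Hf c)). exact: Rcontinuity_abs.
  - apply: (continuity_pt_comp (fun t => Im (f t)) Rabs). exact: (proj2 (Hf c)). exact: Rcontinuity_abs.
case: (continuity_ab_maj _ _ _ Hab c1) => Mx [HM _].
exists (Rabs (Re (f Mx)) + Rabs (Im (f Mx))). split.
  have := Rabs_pos (Re (f Mx)); have := Rabs_pos (Im (f Mx)); lra.
move=> x Hx. apply: Rle_trans (Cmod_le_reim _) _. exact: HM.
Qed.

Lemma ccont_unif f a b eps : ccont f -> 0 < eps -> exists del, 0 < del /\
  forall x y, a <= x <= b -> a <= y <= b -> Rabs (x - y) < del -> Cmod (Cminus (f x) (f y)) < eps.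
Proof.
move=> Hf He.
have He2 : 0 < eps / 2 by lra.
case: (Heine_cor2 (f := fun t => Re (f t)) (a:=a) (b:=b) (fun x _ => proj1 (Hf x)) (mkposreal _ He2)) => d1 H1.
case: (Heine_cor2 (f := fun t => Im (f t)) (a:=a) (b:=b) (fun x _ => proj2 (Hf x)) (mkposreal _ He2)) => d2 H2.
exists (Rmin d1 d2). split. apply: Rmin_pos; [exact: cond_pos | exact: cond_pos].
move=> x y Hx Hy Hxy. apply: Rle_lt_trans (Cmod_le_reim _) _.
have A1 := H1 x y Hx Hy (Rlt_le_trans _ _ _ Hxy (Rmin_l _ _)).
have A2 := H2 x y Hx Hy (Rlt_le_trans _ _ _ Hxy (Rmin_r _ _)).
simpl in A1, A2.
have -> : Re (Cminus (f x) (f y)) = Re (f x) - Re (f y) by rewrite /Cminus /Re /=; ring.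
have -> : Im (Cminus (f x) (f y)) = Im (f x) - Im (f y) by rewrite /Cminus /Im /=; ring.
lra.
Qed.

Lemma ccont_of_eps f :
  (forall x eps, 0 < eps -> exists del, 0 < del /\ forall y, Rabs (y - x) < del -> Cmod (Cminus (f y) (f x)) < eps) ->
  ccont f.
Proof.
move=> H x. split.
- move=> eps He. case: (H x eps He) => del [Hd Hy]. exists del; split => // y [_ Hyx].
  simpl in Hyx |- *. rewrite /R_dist in Hyx |- *. apply: Rle_lt_trans (Hy y Hyx).
  have -> : Re (f y) - Re (f x) = Re (Cminus (f y) (f x)) by rewrite /Cminus /Re /=; ring.
  exact: re_le_Cmod.
- move=> eps He. case: (H x eps He) => del [Hd Hy]. exists del; split => // y [_ Hyx].
  simpl in Hyx |- *. rewrite /R_dist in Hyx |- *. apply: Rle_lt_trans (Hy y Hyx).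
  have -> : Im (f y) - Im (f x) = Im (Cminus (f y) (f x)) by rewrite /Cminus /Im /=; ring.
  exact: im_le_Cmod.
Qed.

Lemma cint_bound f a b M : cex f a b -> (forall x, Rmin a b <= x <= Rmax a b -> Cmod (f x) <= M) ->
  Cmod (cint f a b) <= Rabs (b - a) * M.
Proof.
move=> Hf HM. rewrite Cmod_norm.
apply: (norm_RInt_le_const_abs (V:=C_R_NormedModule) f a b).
- move=> x Hx. rewrite -Cmod_norm. exact: HM.
- exact: cex_cis.
Qed.

Lemma cint_chasles f a b c : cex f a b -> cex f b c -> Cplus (cint f a b) (cint f b c) = cint f a c.
Proof. move=> H1 H2. exact: (RInt_Chasles (V:=C_R_CompleteNormedModule)). Qed.

Lemma cint_minus f g a b : cex f a b -> cex g a b ->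
  cint (fun s => Cminus (f s) (g s)) a b = Cminus (cint f a b) (cint g a b).
Proof.
move=> Hf Hg. have Hg' : cex (fun s => Cmult (RtoC (-1)) (g s)) a b by exact: cex_cmul.
rewrite (cint_ext (g := fun s => Cplus (f s) (Cmult (RtoC (-1)) (g s)))); last first.
  move=> x _. rewrite /Cminus. ring.
rewrite cint_plus // cint_cmul //. rewrite /Cminus. ring.
Qed.

Definition cconv (g h : R -> C) (t : R) : C := cint (fun s => Cmult (g (t - s)) (h s)) 0 t.

Lemma ccont_conv g h : ccont g -> ccont h -> ccont (cconv g h).
Proof.
move=> Hg Hh. apply: ccont_of_eps => t0 eps He.
set T := Rabs t0 + 1.
have HT : 0 < T by rewrite /T; have := Rabs_pos t0; lra.
case: (ccont_bound (-(2*T)) (2*T) Hg) => Mg [Mg0 HMg].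
case: (ccont_bound (-(2*T)) (2*T) Hh) => Mh [Mh0 HMh].
set e1 := eps / (2 * (T * (Mh + 1))).
have He1 : 0 < e1 by rewrite /e1; apply: Rdiv_lt_0_compat => //; nra.
case: (ccont_unif (-(2*T)) (2*T) Hg He1) => del [Hdel Hu].
set del' := Rmin (Rmin del 1) (eps / (2 * (Mg * Mh + 1))).
have Hdel' : 0 < del'.
  rewrite /del'. apply: Rmin_pos. apply: Rmin_pos => //; lra.
  apply: Rdiv_lt_0_compat => //; nra.
exists del'; split => // t Ht.
have Ht1 : Rabs (t - t0) < 1 by apply: Rlt_le_trans Ht _; rewrite /del'; apply: Rle_trans (Rmin_l _ _) (Rmin_r _ _).
have Htd : Rabs (t - t0) < del by apply: Rlt_le_trans Ht _; rewrite /del'; apply: Rle_trans (Rmin_l _ _) (Rmin_l _ _).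
have Hte : Rabs (t - t0) < eps / (2 * (Mg * Mh + 1)) by apply: Rlt_le_trans Ht (Rmin_r _ _).
have Hc : forall u, ccont (fun s => Cmult (g (u - s)) (h s)) by move=> u; apply: ccont_mult => //; exact: ccont_sub_arg.
rewrite /cconv.
rewrite -(cint_chasles (b := t0)); try exact: ccont_cex.
have Habs : forall x, Rabs x <= 2*T -> -(2*T) <= x <= 2*T.
  move=> x. split_Rabs; lra.
have -> : Cminus (Cplus (cint (fun s => Cmult (g (t - s)) (h s)) 0 t0) (cint (fun s => Cmult (g (t - s)) (h s)) t0 t))
          (cint (fun s => Cmult (g (t0 - s)) (h s)) 0 t0)
        = Cplus (cint (fun s => Cminus (Cmult (g (t - s)) (h s)) (Cmult (g (t0 - s)) (h s))) 0 t0)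
                (cint (fun s => Cmult (g (t - s)) (h s)) t0 t).
  rewrite cint_minus; try exact: ccont_cex. rewrite /Cminus. ring.
apply: Rle_lt_trans (Cmod_triangle _ _) _.
have B1 : Cmod (cint (fun s => Cminus (Cmult (g (t - s)) (h s)) (Cmult (g (t0 - s)) (h s))) 0 t0) <= Rabs (t0 - 0) * (e1 * Mh).
  apply: cint_bound.
    apply: ccont_cex. apply: ccont_minus; exact: Hc.
  move=> x Hx.
  have Hx' : Rabs x <= Rabs t0.
    move: Hx; rewrite /Rmin /Rmax; case: Rle_dec => _; split_Rabs; lra.
  have -> : Cminus (Cmult (g (t - x)) (h x)) (Cmult (g (t0 - x)) (h x)) = Cmult (Cminus (g (t - x)) (g (t0 - x))) (h x).
    rewrite /Cminus; ring.
  rewrite Cmod_mult. apply: Rmult_le_compat; try exact: Cmod_ge_0.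
  + apply: Rlt_le. apply: Hu.
    * apply: Habs. move: Ht1 Hx'; rewrite /T; split_Rabs; lra.
    * apply: Habs. move: Hx'; rewrite /T; split_Rabs; lra.
    * have -> : t - x - (t0 - x) = t - t0 by ring. exact: Htd.
  + apply: HMh. apply: Habs. move: Hx'; rewrite /T; have := Rabs_pos t0; lra.
have B2 : Cmod (cint (fun s => Cmult (g (t - s)) (h s)) t0 t) <= Rabs (t - t0) * (Mg * Mh).
  apply: cint_bound. exact: ccont_cex.
  move=> x Hx.
  have Hx' : Rabs (x - t0) <= Rabs (t - t0).
    move: Hx; rewrite /Rmin /Rmax; case: Rle_dec => _; split_Rabs; lra.
  rewrite Cmod_mult. apply: Rmult_le_compat; try exact: Cmod_ge_0.
  + apply: HMg. apply: Habs. move: Hx' Ht1; rewrite /T; split_Rabs; lra.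
  + apply: HMh. apply: Habs. move: Hx' Ht1; rewrite /T; split_Rabs; lra.
have E1 : Rabs (t0 - 0) * (e1 * Mh) <= eps / 2.
  have -> : t0 - 0 = t0 by ring.
  have HT' : Rabs t0 <= T by rewrite /T; lra.
  have Heq : T * e1 * (Mh + 1) = eps / 2.
    rewrite /e1. field. have : 0 < T * (Mh + 1) by nra. lra.
  rewrite -Heq. apply: (Rle_trans _ (T * (e1 * Mh))). apply: Rmult_le_compat_r. nra. lra. nra.
have E2 : Rabs (t - t0) * (Mg * Mh) < eps / 2.
  have Hp : 0 <= Mg * Mh by nra.
  apply: (Rle_lt_trans _ (Rabs (t - t0) * (Mg * Mh + 1))).
    apply: Rmult_le_compat_l. apply: Rabs_pos. lra.
  apply: (Rlt_le_trans _ (eps / (2 * (Mg * Mh + 1)) * (Mg * Mh + 1))).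
    apply: Rmult_lt_compat_r. lra. done.
  have -> : eps / (2 * (Mg * Mh + 1)) * (Mg * Mh + 1) = eps / 2 by field; lra.
  lra.
lra.
Qed.

Definition cderiv (F : R -> C) (t : R) (l : C) := is_derive (K:=R_AbsRing) (V:=C_R_NormedModule) F t l.

Lemma cderive_eps (F : R -> C) t l :
  (forall eps, 0 < eps -> exists del, 0 < del /\ forall y, Rabs (y - t) < del ->
     Cmod (Cminus (Cminus (F y) (F t)) (Cmult (RtoC (y - t)) l)) <= eps * Rabs (y - t)) ->
  cderiv F t l.
Proof.
move=> H. split. exact: is_linear_scal_l.
move=> x Hx. have Ex := is_filter_lim_locally_unique _ _ Hx. subst x.
move=> eps. case: (H eps (cond_pos eps)) => del [Hd Hy].
exists (mkposreal _ Hd) => y Hby.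
have Hy' : Rabs (y - t) < del by exact: Hby.
have := Hy y Hy'. rewrite Cmod_norm.
have -> : scal (minus y t) l = Cmult (RtoC (y - t)) l by rewrite scal_R_Cmult.
done.
Qed.

Lemma cint_const c a b : cint (fun _ => c) a b = Cmult (RtoC (b - a)) c.
Proof.
apply: cis_cint. have := is_RInt_const (V:=C_R_NormedModule) a b c. by rewrite scal_R_Cmult.
Qed.

Lemma ftc_c p a t : ccont p -> cderiv (fun x => cint p a x) t (p t).
Proof.
move=> Hp. apply: cderive_eps => eps He.
case: (ccont_unif (t - 1) (t + 1) Hp He) => del [Hd Hu].
exists (Rmin del 1). split. apply: Rmin_pos; lra.
move=> y Hy.
have Hy1 : Rabs (y - t) < 1 by apply: Rlt_le_trans Hy (Rmin_r _ _).
have Hyd : Rabs (y - t) < del by apply: Rlt_le_trans Hy (Rmin_l _ _).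
have -> : Cminus (cint p a y) (cint p a t) = cint p t y.
  rewrite -(cint_chasles (f:=p) (a:=a) (b:=t) (c:=y)); try exact: ccont_cex. rewrite /Cminus; ring.
rewrite -cint_const -cint_minus; try exact: ccont_cex.
apply: Rle_trans (cint_bound (M := eps) _ _) _.
- apply: ccont_cex. apply: ccont_minus => //. exact: ccont_const.
- move=> x Hx. apply: Rlt_le. apply: Hu.
  + move: Hx Hy1; rewrite /Rmin /Rmax; case: Rle_dec => _; split_Rabs; lra.
  + lra.
  + move: Hx Hyd; rewrite /Rmin /Rmax; case: Rle_dec => _; split_Rabs; lra.
- rewrite Rmult_comm. lra.
- apply: ccont_cex. exact: ccont_const.
Qed.

Definition jgood (P : R -> R -> C) :=
  forall K, 0 <= K ->
   (exists M, 0 <= M /\ forall x y, Rabs x <= K -> Rabs y <= K -> Cmod (P x y) <= M) /\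
   (forall eps, 0 < eps -> exists del, 0 < del /\ forall x y x' y', Rabs x <= K -> Rabs y <= K ->
       Rabs x' <= K -> Rabs y' <= K -> Rabs (x - x') < del -> Rabs (y - y') < del ->
       Cmod (Cminus (P x y) (P x' y')) < eps).

Lemma abs_lin_bound a b x y K : Rabs x <= K -> Rabs y <= K -> Rabs (a * x + b * y) <= (Rabs a + Rabs b) * K.
Proof.
move=> Hx Hy. apply: Rle_trans (Rabs_triang _ _) _. rewrite !Rabs_mult.
have := Rabs_pos a; have := Rabs_pos b. nra.
Qed.

Lemma abs_lin_diff a b x y x' y' del : Rabs (x - x') < del -> Rabs (y - y') < del ->
  Rabs ((a * x + b * y) - (a * x' + b * y')) <= (Rabs a + Rabs b) * del.
Proof.
move=> Hx Hy. have -> : (a * x + b * y) - (a * x' + b * y') = a * (x - x') + b * (y - y') by ring.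
apply: Rle_trans (Rabs_triang _ _) _. rewrite !Rabs_mult.
have := Rabs_pos a; have := Rabs_pos b. nra.
Qed.

Lemma jgood_compose P a1 b1 a2 b2 : jgood P -> jgood (fun x y => P (a1 * x + b1 * y) (a2 * x + b2 * y)).
Proof.
move=> HP K HK.
set S := Rabs a1 + Rabs b1 + Rabs a2 + Rabs b2.
have HS : 0 <= S by rewrite /S; have := Rabs_pos a1; have := Rabs_pos b1; have := Rabs_pos a2; have := Rabs_pos b2; lra.
have HK' : 0 <= S * K by nra.
case: (HP (S * K) HK') => [[M [HM0 HM]] HU].
have Hb1 : forall x y, Rabs x <= K -> Rabs y <= K -> Rabs (a1 * x + b1 * y) <= S * K.
  move=> x y Hx Hy. apply: Rle_trans (abs_lin_bound a1 b1 Hx Hy) _.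
  apply: Rmult_le_compat_r => //. rewrite /S; have := Rabs_pos a2; have := Rabs_pos b2; lra.
have Hb2 : forall x y, Rabs x <= K -> Rabs y <= K -> Rabs (a2 * x + b2 * y) <= S * K.
  move=> x y Hx Hy. apply: Rle_trans (abs_lin_bound a2 b2 Hx Hy) _.
  apply: Rmult_le_compat_r => //. rewrite /S; have := Rabs_pos a1; have := Rabs_pos b1; lra.
split.
- exists M; split => // x y Hx Hy. apply: HM; [exact: Hb1 | exact: Hb2].
- move=> eps He. case: (HU eps He) => del [Hd Hdel].
  exists (del / (S + 1)). split. apply: Rdiv_lt_0_compat; lra.
  move=> x y x' y' Hx Hy Hx' Hy' Hxx Hyy.
  have Hq : (S + 1) * (del / (S + 1)) = del by field; lra.
  have Hq2 : 0 < del / (S + 1) by apply: Rdiv_lt_0_compat; lra.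
  apply: Hdel; try (apply: Hb1 || apply: Hb2); try done.
  + apply: Rle_lt_trans (abs_lin_diff a1 b1 Hxx Hyy) _.
    rewrite -{2}Hq. apply: Rmult_lt_compat_r => //. rewrite /S. have := Rabs_pos a2; have := Rabs_pos b2. lra.
  + apply: Rle_lt_trans (abs_lin_diff a2 b2 Hxx Hyy) _.
    rewrite -{2}Hq. apply: Rmult_lt_compat_r => //. rewrite /S. have := Rabs_pos a1; have := Rabs_pos b1. lra.
Qed.

Lemma jgood_lin f a b c : ccont f -> jgood (fun x y => f (a * x + b * y + c)).
Proof.
move=> Hf K HK.
set K' := (Rabs a + Rabs b) * K + Rabs c.
have Hb : forall x y, Rabs x <= K -> Rabs y <= K -> -K' <= a * x + b * y + c <= K'.
  move=> x y Hx Hy. have H1 := abs_lin_bound a b Hx Hy. have H2 := Rabs_pos c.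
  have H3 : Rabs (a * x + b * y + c) <= K' by apply: Rle_trans (Rabs_triang _ _) _; rewrite /K'; lra.
  move: H3. split_Rabs; lra.
split.
- case: (ccont_bound (-K') K' Hf) => M [HM0 HM]. exists M; split => // x y Hx Hy. apply: HM. exact: Hb.
- move=> eps He. case: (ccont_unif (-K') K' Hf He) => del [Hd Hu].
  set S := Rabs a + Rabs b.
  have HS : 0 <= S by rewrite /S; have := Rabs_pos a; have := Rabs_pos b; lra.
  exists (del / (S + 1)). split. apply: Rdiv_lt_0_compat; lra.
  move=> x y x' y' Hx Hy Hx' Hy' Hxx Hyy. apply: Hu; try exact: Hb.
  have Hq : (S + 1) * (del / (S + 1)) = del by field; lra.
  have Hq2 : 0 < del / (S + 1) by apply: Rdiv_lt_0_compat; lra.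
  have := abs_lin_diff a b Hxx Hyy.
  have -> : a * x + b * y + c - (a * x' + b * y' + c) = (a * x + b * y) - (a * x' + b * y') by ring.
  rewrite -/S. move=> H0. apply: Rle_lt_trans H0 _.
  rewrite -{2}Hq. apply: Rmult_lt_compat_r => //. lra.
Qed.

Lemma jgood_plus P Q : jgood P -> jgood Q -> jgood (fun x y => Cplus (P x y) (Q x y)).
Proof.
move=> HP HQ K HK. case: (HP K HK) => [[MP [HMP0 HMP]] UP]. case: (HQ K HK) => [[MQ [HMQ0 HMQ]] UQ].
split.
- exists (MP + MQ); split. lra. move=> x y Hx Hy. apply: Rle_trans (Cmod_triangle _ _) _.
  have := HMP x y Hx Hy; have := HMQ x y Hx Hy; lra.
- move=> eps He. have He2 : 0 < eps / 2 by lra.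
  case: (UP _ He2) => d1 [Hd1 H1]. case: (UQ _ He2) => d2 [Hd2 H2].
  exists (Rmin d1 d2); split. exact: Rmin_pos.
  move=> x y x' y' Hx Hy Hx' Hy' Hxx Hyy.
  have -> : Cminus (Cplus (P x y) (Q x y)) (Cplus (P x' y') (Q x' y')) = Cplus (Cminus (P x y) (P x' y')) (Cminus (Q x y) (Q x' y')).
    rewrite /Cminus; ring.
  apply: Rle_lt_trans (Cmod_triangle _ _) _.
  have := H1 x y x' y' Hx Hy Hx' Hy' (Rlt_le_trans _ _ _ Hxx (Rmin_l _ _)) (Rlt_le_trans _ _ _ Hyy (Rmin_l _ _)).
  have := H2 x y x' y' Hx Hy Hx' Hy' (Rlt_le_trans _ _ _ Hxx (Rmin_r _ _)) (Rlt_le_trans _ _ _ Hyy (Rmin_r _ _)).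
  lra.
Qed.

Lemma jgood_mult P Q : jgood P -> jgood Q -> jgood (fun x y => Cmult (P x y) (Q x y)).
Proof.
move=> HP HQ K HK. case: (HP K HK) => [[MP [HMP0 HMP]] UP]. case: (HQ K HK) => [[MQ [HMQ0 HMQ]] UQ].
split.
- exists (MP * MQ); split. nra. move=> x y Hx Hy. rewrite Cmod_mult.
  apply: Rmult_le_compat; try exact: Cmod_ge_0; [exact: HMP | exact: HMQ].
- move=> eps He.
  set e1 := eps / (2 * (MQ + 1)). set e2 := eps / (2 * (MP + 1)).
  have He1 : 0 < e1 by rewrite /e1; apply: Rdiv_lt_0_compat; lra.
  have He2 : 0 < e2 by rewrite /e2; apply: Rdiv_lt_0_compat; lra.
  case: (UP _ He1) => d1 [Hd1 H1]. case: (UQ _ He2) => d2 [Hd2 H2].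
  exists (Rmin d1 d2); split. exact: Rmin_pos.
  move=> x y x' y' Hx Hy Hx' Hy' Hxx Hyy.
  have -> : Cminus (Cmult (P x y) (Q x y)) (Cmult (P x' y') (Q x' y')) =
            Cplus (Cmult (Cminus (P x y) (P x' y')) (Q x y)) (Cmult (P x' y') (Cminus (Q x y) (Q x' y'))).
    rewrite /Cminus; ring.
  apply: Rle_lt_trans (Cmod_triangle _ _) _. rewrite !Cmod_mult.
  have A1 := H1 x y x' y' Hx Hy Hx' Hy' (Rlt_le_trans _ _ _ Hxx (Rmin_l _ _)) (Rlt_le_trans _ _ _ Hyy (Rmin_l _ _)).
  have A2 := H2 x y x' y' Hx Hy Hx' Hy' (Rlt_le_trans _ _ _ Hxx (Rmin_r _ _)) (Rlt_le_trans _ _ _ Hyy (Rmin_r _ _)).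
  have B1 := HMQ x y Hx Hy. have B2 := HMP x' y' Hx' Hy'.
  have C1 : Cmod (Cminus (P x y) (P x' y')) * Cmod (Q x y) <= e1 * MQ.
    apply: Rmult_le_compat; try exact: Cmod_ge_0; lra.
  have C2 : Cmod (P x' y') * Cmod (Cminus (Q x y) (Q x' y')) <= MP * e2.
    apply: Rmult_le_compat; try exact: Cmod_ge_0; lra.
  have D1 : e1 * MQ < eps / 2.
    have E : e1 * (MQ + 1) = eps / 2 by rewrite /e1; field; lra.
    rewrite Rmult_plus_distr_l Rmult_1_r in E. lra.
  have D2 : MP * e2 < eps / 2.
    have E : e2 * (MP + 1) = eps / 2 by rewrite /e2; field; lra.
    rewrite Rmult_plus_distr_l Rmult_1_r in E. lra.
  lra.
Qed.

Lemma jgood_const c : jgood (fun _ _ => c).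
Proof.
exact: (@jgood_lin (fun _ => c) 0 0 0 (ccont_const c)).
Qed.

Lemma jgood_fx f : ccont f -> jgood (fun x _ => f x).
Proof.
move=> Hf. have -> : (fun x (_ : R) => f x) = (fun x y => f (1 * x + 0 * y + 0)).
  apply: functional_extensionality => x. apply: functional_extensionality => y. f_equal. ring.
exact: jgood_lin.
Qed.
Lemma jgood_fy f : ccont f -> jgood (fun _ y => f y).
Proof.
move=> Hf. have -> : (fun (_ : R) y => f y) = (fun x y => f (0 * x + 1 * y + 0)).
  apply: functional_extensionality => x. apply: functional_extensionality => y. f_equal. ring.
exact: jgood_lin.
Qed.

Lemma jgood_x P y0 : jgood P -> ccont (fun x => P x y0).
Proof.
move=> HP. apply: ccont_of_eps => x0 eps He.
set K := Rmax (Rabs x0 + 1) (Rabs y0).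
have HK : 0 <= K by rewrite /K; apply: Rle_trans (Rmax_r _ _); exact: Rabs_pos.
case: (HP K HK) => _ HU. case: (HU eps He) => del [Hd H].
exists (Rmin del 1); split. apply: Rmin_pos; lra.
move=> y Hy.
have Hy1 : Rabs (y - x0) < 1 by apply: Rlt_le_trans Hy (Rmin_r _ _).
have K1 := Rmax_l (Rabs x0 + 1) (Rabs y0). have K2 := Rmax_r (Rabs x0 + 1) (Rabs y0). rewrite -/K in K1 K2.
apply: H.
- move: Hy1 K1; split_Rabs; lra.
- done.
- lra.
- done.
- apply: Rlt_le_trans Hy (Rmin_l _ _).
- rewrite Rminus_eq_0 Rabs_R0. done.
Qed.

Lemma jgood_y P x0 : jgood P -> ccont (fun y => P x0 y).
Proof.
move=> HP. have := @jgood_x _ x0 (@jgood_compose P 0 1 1 0 HP).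
have -> : (fun x => P (0 * x + 1 * x0) (1 * x + 0 * x0)) = (fun y => P x0 y).
  apply: functional_extensionality => y. f_equal; ring.
done.
Qed.

Lemma abs_between p q u K : Rabs p <= K -> Rabs q <= K -> Rmin p q <= u <= Rmax p q -> Rabs u <= K.
Proof. rewrite /Rmin /Rmax; case: Rle_dec => _; split_Rabs; lra. Qed.

Lemma jgood_cex P x a b : jgood P -> cex (fun u => P x u) a b.
Proof. move=> HP. apply: ccont_cex. exact: jgood_y. Qed.

Lemma pc_gen P a1 b1 a2 b2 : jgood P ->
  ccont (fun x => cint (fun u => P x u) (a1 * x + b1) (a2 * x + b2)).
Proof.
move=> HP. apply: ccont_of_eps => x0 eps He.
set X := Rabs x0 + 1.
set K := X + (Rabs a1 + Rabs a2) * X + Rabs b1 + Rabs b2.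
have HX : 0 <= X by rewrite /X; have := Rabs_pos x0; lra.
have Ha := Rabs_pos a1. have Ha2 := Rabs_pos a2. have Hb := Rabs_pos b1. have Hb2 := Rabs_pos b2.
have HKX : X <= K by rewrite /K; nra.
have HK : 0 <= K by lra.
have HA : forall x, Rabs x <= X -> Rabs (a1 * x + b1) <= K.
  move=> x Hx. apply: Rle_trans (Rabs_triang _ _) _. rewrite Rabs_mult. rewrite /K. nra.
have HB : forall x, Rabs x <= X -> Rabs (a2 * x + b2) <= K.
  move=> x Hx. apply: Rle_trans (Rabs_triang _ _) _. rewrite Rabs_mult. rewrite /K. nra.
have Hx0 : Rabs x0 <= X by rewrite /X; lra.
case: (HP K HK) => [[M [HM0 HM]] HU].
set L := Rabs ((a2 * x0 + b2) - (a1 * x0 + b1)).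
have HL : 0 <= L by exact: Rabs_pos.
set e' := eps / (3 * (L + 1)).
have He' : 0 < e' by rewrite /e'; apply: Rdiv_lt_0_compat; lra.
case: (HU e' He') => del [Hd Hdel].
set S := (M + 1) * (Rabs a1 + Rabs a2 + 1).
have HS : 0 < S by rewrite /S; nra.
exists (Rmin (Rmin del 1) (eps / (3 * S))). split.
  apply: Rmin_pos. apply: Rmin_pos; lra. apply: Rdiv_lt_0_compat; lra.
move=> x Hx.
have Hx1 : Rabs (x - x0) < 1 by apply: Rlt_le_trans Hx _; apply: Rle_trans (Rmin_l _ _) (Rmin_r _ _).
have Hxd : Rabs (x - x0) < del by apply: Rlt_le_trans Hx _; apply: Rle_trans (Rmin_l _ _) (Rmin_l _ _).
have Hxe : Rabs (x - x0) < eps / (3 * S) by apply: Rlt_le_trans Hx (Rmin_r _ _).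
have HxX : Rabs x <= X by move: Hx1; rewrite /X; split_Rabs; lra.
have Hc := fun y p q => jgood_cex y p q HP.
rewrite -(cint_chasles (f := fun u => P x u) (a := a1 * x + b1) (b := a1 * x0 + b1)) //.
rewrite -(cint_chasles (f := fun u => P x u) (a := a1 * x0 + b1) (b := a2 * x0 + b2)) //.
have -> : Cminus (Cplus (cint (fun u => P x u) (a1 * x + b1) (a1 * x0 + b1))
     (Cplus (cint (fun u => P x u) (a1 * x0 + b1) (a2 * x0 + b2)) (cint (fun u => P x u) (a2 * x0 + b2) (a2 * x + b2))))
     (cint (fun u => P x0 u) (a1 * x0 + b1) (a2 * x0 + b2))
   = Cplus (cint (fun u => P x u) (a1 * x + b1) (a1 * x0 + b1))
     (Cplus (cint (fun u => Cminus (P x u) (P x0 u)) (a1 * x0 + b1) (a2 * x0 + b2)) (cint (fun u => P x u) (a2 * x0 + b2) (a2 * x + b2))).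
  rewrite cint_minus //. change (fun u => P x u) with (P x). change (fun u => P x0 u) with (P x0). rewrite /Cminus. ring.
apply: Rle_lt_trans (Cmod_triangle _ _) _.
apply: Rle_lt_trans (Rplus_le_compat_l _ _ _ (Cmod_triangle _ _)) _.
have T1 : Cmod (cint (fun u => P x u) (a1 * x + b1) (a1 * x0 + b1)) <= Rabs ((a1 * x0 + b1) - (a1 * x + b1)) * M.
  apply: cint_bound => // u Hu. apply: HM => //. lra.
  apply: (abs_between (HA x HxX) (HA x0 Hx0) Hu).
have T3 : Cmod (cint (fun u => P x u) (a2 * x0 + b2) (a2 * x + b2)) <= Rabs ((a2 * x + b2) - (a2 * x0 + b2)) * M.
  apply: cint_bound => // u Hu. apply: HM => //. lra.
  apply: (abs_between (HB x0 Hx0) (HB x HxX) Hu).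
have T2 : Cmod (cint (fun u => Cminus (P x u) (P x0 u)) (a1 * x0 + b1) (a2 * x0 + b2)) <= L * e'.
  apply: cint_bound.
    apply: ccont_cex. apply: ccont_minus; exact: jgood_y.
  move=> u Hu. apply: Rlt_le. apply: Hdel; try lra.
  - apply: (abs_between (HA x0 Hx0) (HB x0 Hx0) Hu).
  - apply: (abs_between (HA x0 Hx0) (HB x0 Hx0) Hu).
  - rewrite Rminus_eq_0 Rabs_R0. done.
have E1 : Rabs ((a1 * x0 + b1) - (a1 * x + b1)) <= Rabs a1 * Rabs (x - x0).
  have -> : (a1 * x0 + b1) - (a1 * x + b1) = - (a1 * (x - x0)) by ring.
  rewrite Rabs_Ropp Rabs_mult. lra.
have E3 : Rabs ((a2 * x + b2) - (a2 * x0 + b2)) <= Rabs a2 * Rabs (x - x0).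
  have -> : (a2 * x + b2) - (a2 * x0 + b2) = a2 * (x - x0) by ring.
  rewrite Rabs_mult. lra.
have F2 : L * e' < eps / 3.
  have E : e' * (L + 1) = eps / 3 by rewrite /e'; field; lra.
  rewrite Rmult_plus_distr_l Rmult_1_r in E. nra.
have Hxp := Rabs_pos (x - x0).
have F13 : (Rabs a1 * Rabs (x - x0)) * M + (Rabs a2 * Rabs (x - x0)) * M <= S * Rabs (x - x0).
  rewrite /S. nra.
have F13' : S * Rabs (x - x0) < eps / 3.
  have E : S * (eps / (3 * S)) = eps / 3 by field; lra.
  rewrite -E. apply: Rmult_lt_compat_l => //.
have G1 : Rabs ((a1 * x0 + b1) - (a1 * x + b1)) * M <= (Rabs a1 * Rabs (x - x0)) * M by apply: Rmult_le_compat_r.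
have G3 : Rabs ((a2 * x + b2) - (a2 * x0 + b2)) * M <= (Rabs a2 * Rabs (x - x0)) * M by apply: Rmult_le_compat_r.
lra.
Qed.

Lemma ccont_ext f g : (forall x, f x = g x) -> ccont f -> ccont g.
Proof. move=> H. have -> : g = f by apply: functional_extensionality => x; rewrite H. done. Qed.
Lemma Cminus_eq_0' (x : C) : Cminus x x = RtoC 0.
Proof. rewrite /Cminus; ring. Qed.
Lemma Cminus_eq0 (x y : C) : Cminus x y = RtoC 0 -> x = y.
Proof. move=> H. have -> : x = Cplus (Cminus x y) y by rewrite /Cminus; ring. rewrite H; ring. Qed.

Lemma ccont_cmul c f : ccont f -> ccont (fun t => Cmult c (f t)).
Proof. move=> H. apply: (ccont_mult (f := fun _ => c)) => //. exact: ccont_const. Qed.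

Lemma cint_point f a : cint f a a = RtoC 0.
Proof. rewrite /cint RInt_point. done. Qed.

Lemma cint_shift f c a b : cex f (a - c) (b - c) -> cint (fun u => f (u - c)) a b = cint f (a - c) (b - c).
Proof.
move=> H.
have E := RInt_comp_lin (V:=C_R_CompleteNormedModule) f 1 (- c) a b.
have Ea : 1 * a + - c = a - c by ring. have Eb : 1 * b + - c = b - c by ring.
rewrite Ea Eb in E. rewrite /cint -E //. apply: (RInt_ext (V:=C_R_CompleteNormedModule)) => x _.
rewrite scal_one. f_equal. ring.
Qed.

Lemma cderiv_zero_eq (D : R -> C) t : (forall x, cderiv D x (RtoC 0)) -> D t = D 0.
Proof.
move=> H. case: (Rtotal_order 0 t) => [Ht|[<-|Ht]] //.
- symmetry. apply: (eq_is_derive (V:=C_R_NormedModule)) => // x _. exact: H.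
- apply: (eq_is_derive (V:=C_R_NormedModule)) => // x _. exact: H.
Qed.

Lemma cderiv_minus F G t l1 l2 : cderiv F t l1 -> cderiv G t l2 -> cderiv (fun x => Cminus (F x) (G x)) t (Cminus l1 l2).
Proof. move=> H1 H2. exact: (is_derive_minus (V:=C_R_NormedModule) _ _ _ _ _ H1 H2). Qed.

Lemma TF P t : jgood P ->
  cint (fun s => cint (fun tau => P tau s) 0 (t - s)) 0 t =
  cint (fun s => cint (fun sg => P (s - sg) sg) 0 s) 0 t.
Proof.
move=> HP.
set Q := fun s sg => P (s - sg) sg.
have HQ : jgood Q.
  have := jgood_compose 1 (-1) 0 1 HP. rewrite /Q.
  have -> : (fun x y => P (1 * x + -1 * y) (0 * x + 1 * y)) = (fun s sg => P (s - sg) sg).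
    apply: functional_extensionality => x; apply: functional_extensionality => y. f_equal; ring.
  done.
have HQs : jgood (fun x u => Q u x).
  have := jgood_compose 0 1 1 0 HQ.
  have -> : (fun x y => Q (0 * x + 1 * y) (1 * x + 0 * y)) = (fun x u => Q u x).
    apply: functional_extensionality => x; apply: functional_extensionality => y. f_equal; ring.
  done.
have HK : forall y, ccont (fun sg => cint (fun u => Q u sg) sg y).
  move=> y. have := pc_gen 1 0 0 y HQs.
  have -> : (fun x => cint (fun u => Q u x) (1 * x + 0) (0 * x + y)) = (fun sg => cint (fun u => Q u sg) sg y).
    apply: functional_extensionality => x. f_equal; ring.
  done.
have Hp : ccont (fun s => cint (fun sg => Q s sg) 0 s).
  have := pc_gen 0 0 1 0 HQ.
  have -> : (fun x => cint (fun u => Q x u) (0 * x + 0) (1 * x + 0)) = (fun s => cint (fun sg => Q s sg) 0 s).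
    apply: functional_extensionality => x. f_equal; ring.
  done.
have EL : forall y, cint (fun s => cint (fun tau => P tau s) 0 (y - s)) 0 y = cint (fun s => cint (fun u => Q u s) s y) 0 y.
  move=> y. apply: cint_ext => s _. rewrite /Q.
  rewrite (@cint_shift (fun tau => P tau s) s s y). by rewrite Rminus_eq_0.
  apply: ccont_cex. exact: jgood_x.
rewrite EL. rewrite -/Q.
set LH := fun y => cint (fun s => cint (fun u => Q u s) s y) 0 y.
set RH := fun y => cint (fun s => cint (fun sg => Q s sg) 0 s) 0 y.
have DL : forall t0, cderiv LH t0 (cint (fun sg => Q t0 sg) 0 t0).
  move=> t0. apply: cderive_eps => eps He.
  set T := Rabs t0 + 1.
  have HT : 0 <= T by rewrite /T; have := Rabs_pos t0; lra.
  case: (HQ (2 * T) ltac:(lra)) => [[M [HM0 HM]] HU].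
  set e1 := eps / (2 * (Rabs t0 + 1)).
  have He1 : 0 < e1 by rewrite /e1; apply: Rdiv_lt_0_compat => //; have := Rabs_pos t0; lra.
  case: (HU e1 He1) => del [Hd Hdel].
  exists (Rmin (Rmin del 1) (eps / (2 * (M + 1)))). split.
    apply: Rmin_pos. apply: Rmin_pos; lra. apply: Rdiv_lt_0_compat; lra.
  move=> y Hy.
  have Hy1 : Rabs (y - t0) < 1 by apply: Rlt_le_trans Hy _; apply: Rle_trans (Rmin_l _ _) (Rmin_r _ _).
  have Hyd : Rabs (y - t0) < del by apply: Rlt_le_trans Hy _; apply: Rle_trans (Rmin_l _ _) (Rmin_l _ _).
  have Hye : Rabs (y - t0) < eps / (2 * (M + 1)) by apply: Rlt_le_trans Hy (Rmin_r _ _).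
  have Hcq : forall a b sg, cex (fun u => Q u sg) a b by move=> a b sg; apply: ccont_cex; exact: jgood_x.
  have Hcq' : forall a b s, cex (fun sg => Q s sg) a b by move=> a b s; apply: ccont_cex; exact: jgood_y.
  have Hck : forall y a b, cex (fun sg => cint (fun u => Q u sg) sg y) a b by move=> y0 a b; apply: ccont_cex; exact: HK.
  have Ein : forall sg, Cminus (Cminus (cint (fun u => Q u sg) sg y) (cint (fun u => Q u sg) sg t0)) (Cmult (RtoC (y - t0)) (Q t0 sg))
                 = cint (fun u => Cminus (Q u sg) (Q t0 sg)) t0 y.
    move=> sg. rewrite cint_minus //; last by apply: ccont_cex; exact: ccont_const.
    rewrite cint_const -(cint_chasles (f := fun u => Q u sg) (a := sg) (b := t0) (c := y)) //.
    rewrite /Cminus. ring.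
  have -> : Cminus (Cminus (LH y) (LH t0)) (Cmult (RtoC (y - t0)) (cint (fun sg => Q t0 sg) 0 t0))
      = Cplus (cint (fun sg => cint (fun u => Q u sg) sg y) t0 y)
              (cint (fun sg => cint (fun u => Cminus (Q u sg) (Q t0 sg)) t0 y) 0 t0).
    rewrite /LH. rewrite -(cint_chasles (f := fun sg => cint (fun u => Q u sg) sg y) (a := 0) (b := t0) (c := y)) //.
    rewrite (cint_ext (f := fun sg => cint (fun u => Cminus (Q u sg) (Q t0 sg)) t0 y)
                      (g := fun sg => Cminus (Cminus (cint (fun u => Q u sg) sg y) (cint (fun u => Q u sg) sg t0)) (Cmult (RtoC (y - t0)) (Q t0 sg)))); last first.
      move=> x _. by rewrite Ein.
    rewrite cint_minus; try (by apply: ccont_cex; exact: (@ccont_cmul (RtoC (y - t0)) (fun s => Q t0 s) (jgood_y t0 HQ)));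
      try (by apply: ccont_cex; apply: ccont_minus; exact: HK).
    rewrite cint_minus //. rewrite cint_cmul //.
    change (fun sg => Q t0 sg) with (Q t0). rewrite /Cminus. ring.
  apply: Rle_trans (Cmod_triangle _ _) _.
  have B1 : Cmod (cint (fun sg => cint (fun u => Q u sg) sg y) t0 y) <= Rabs (y - t0) * (Rabs (y - t0) * M).
    apply: cint_bound => // sg Hsg.
    have Hsg' : Rabs (y - sg) <= Rabs (y - t0) by move: Hsg; rewrite /Rmin /Rmax; case: Rle_dec => _; split_Rabs; lra.
    apply: Rle_trans (cint_bound (M := M) _ _) _ => //.
    + move=> u Hu. apply: HM.
      * move: Hu Hsg Hy1; rewrite /Rmin /Rmax /T; case: Rle_dec => _; case: Rle_dec => _; split_Rabs; lra.
      * move: Hsg Hy1; rewrite /Rmin /Rmax /T; case: Rle_dec => _; split_Rabs; lra.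
    + apply: Rmult_le_compat_r => //.
  have B2 : Cmod (cint (fun sg => cint (fun u => Cminus (Q u sg) (Q t0 sg)) t0 y) 0 t0) <= Rabs (t0 - 0) * (Rabs (y - t0) * e1).
    apply: cint_bound.
      apply: ccont_cex. apply: (@ccont_ext (fun sg => Cminus (Cminus (cint (fun u => Q u sg) sg y) (cint (fun u => Q u sg) sg t0)) (Cmult (RtoC (y - t0)) (Q t0 sg)))).
        move=> sg; by rewrite Ein.
      apply: ccont_minus. apply: ccont_minus; exact: HK. exact: (@ccont_cmul (RtoC (y - t0)) (fun s => Q t0 s) (jgood_y t0 HQ)).
    move=> sg Hsg.
    apply: Rle_trans (cint_bound (M := e1) _ _) _.
    + apply: ccont_cex. apply: ccont_minus. exact: jgood_x. exact: ccont_const.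
    + move=> u Hu. apply: Rlt_le. apply: Hdel.
      * move: Hu Hy1; rewrite /Rmin /Rmax /T; case: Rle_dec => _; split_Rabs; lra.
      * move: Hsg; rewrite /Rmin /Rmax /T; case: Rle_dec => _; split_Rabs; lra.
      * rewrite /T; split_Rabs; lra.
      * move: Hsg; rewrite /Rmin /Rmax /T; case: Rle_dec => _; split_Rabs; lra.
      * move: Hu Hyd; rewrite /Rmin /Rmax; case: Rle_dec => _; split_Rabs; lra.
      * rewrite Rminus_eq_0 Rabs_R0. done.
    + lra.
  have Hyp := Rabs_pos (y - t0).
  have C1 : Rabs (y - t0) * (Rabs (y - t0) * M) <= Rabs (y - t0) * (eps / 2).
    apply: Rmult_le_compat_l => //.
    have E : (eps / (2 * (M + 1))) * (M + 1) = eps / 2 by field; lra.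
    apply: Rle_trans (_ : Rabs (y - t0) * M <= (eps / (2 * (M + 1))) * (M + 1)) _.
      apply: Rle_trans (_ : Rabs (y - t0) * M <= Rabs (y - t0) * (M + 1)) _. nra.
      apply: Rmult_le_compat_r; lra.
    lra.
  have C2 : Rabs (t0 - 0) * (Rabs (y - t0) * e1) <= Rabs (y - t0) * (eps / 2).
    have E : e1 * (Rabs t0 + 1) = eps / 2 by rewrite /e1; field; have := Rabs_pos t0; lra.
    have -> : t0 - 0 = t0 by ring.
    have := Rabs_pos t0. nra.
  lra.
have DR : forall t0, cderiv RH t0 (cint (fun sg => Q t0 sg) 0 t0).
  move=> t0. rewrite /RH. exact: (ftc_c (p := fun s => cint (fun sg => Q s sg) 0 s)).
have HD : forall x, cderiv (fun y => Cminus (LH y) (RH y)) x (RtoC 0).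
  move=> x. have := cderiv_minus (DL x) (DR x). by rewrite Cminus_eq_0'.
have := cderiv_zero_eq t HD. rewrite /LH /RH !cint_point Cminus_eq_0'. move=> E.
exact: Cminus_eq0 E.
Qed.

Definition mcont d (u : R -> Mat d) := forall i j, ccont (fun t => u t i j).
Definition opcont d (K : R -> Mat d -> Mat d) := forall x, mcont (fun t => K t x).
Definition linfam d (K : R -> Mat d -> Mat d) := forall t, is_linear_map (K t).
Definition mconv d (K : R -> Mat d -> Mat d) (u : R -> Mat d) (t : R) : Mat d :=
  mint (fun s => K (t - s) (u s)) 0 t.

Lemma mcont_mex d (u : R -> Mat d) a b : mcont u -> mex u a b.
Proof. move=> H i j. exact: ccont_cex. Qed.

Lemma mcont_add d (u v : R -> Mat d) : mcont u -> mcont v -> mcont (fun t => madd (u t) (v t)).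
Proof. move=> Hu Hv i j. exact: ccont_plus. Qed.
Lemma mcont_scale d c (u : R -> Mat d) : mcont u -> mcont (fun t => mscale c (u t)).
Proof. move=> Hu i j. exact: ccont_cmul. Qed.
Lemma mcont_const d (x : Mat d) : mcont (fun _ => x).
Proof. move=> i j. exact: ccont_const. Qed.
Lemma mcont_mmul d (u v : R -> Mat d) : mcont u -> mcont v -> mcont (fun t => mmul (u t) (v t)).
Proof. move=> Hu Hv i j. rewrite /mmul. apply: ccont_csum => k. exact: ccont_mult. Qed.

Lemma mcont_app d (K : R -> Mat d -> Mat d) (u : R -> Mat d) :
  linfam K -> opcont K -> mcont u -> mcont (fun t => K t (u t)).
Proof.
move=> HL HK Hu i j.
apply: (@ccont_ext (fun t => csum d (fun k => csum d (fun l => Cmult (u t k l) (K t (Ebas k l) i j))))).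
  move=> t. by rewrite (@lin_expand d (K t) (u t) i j (HL t)).
apply: ccont_csum => k. apply: ccont_csum => l. apply: ccont_mult. exact: Hu. exact: HK.
Qed.

Lemma opcont_sub d (K : R -> Mat d -> Mat d) c : opcont K -> opcont (fun t => K (c - t)).
Proof. move=> H x i j. apply: (@ccont_sub_arg (fun t => K t x i j) c). exact: H. Qed.

Lemma mconv_entry d (K : R -> Mat d -> Mat d) (u : R -> Mat d) t i j :
  linfam K -> opcont K -> mcont u ->
  mconv K u t i j = csum d (fun k => csum d (fun l =>
     cconv (fun tau => K tau (Ebas k l) i j) (fun s => u s k l) t)).
Proof.
move=> HL HK Hu. rewrite /mconv /mint /cconv.
rewrite (cint_ext (g := fun s => csum d (fun k => csum d (fun l => Cmult (K (t - s) (Ebas k l) i j) (u s k l))))); last first.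
  move=> s _. rewrite lin_expand //. apply: csum_ext => k; apply: csum_ext => l. exact: Cmult_comm.
rewrite cint_csum; last first.
  move=> k. apply: ccont_cex. apply: ccont_csum => l. apply: ccont_mult.
  apply: (@ccont_sub_arg (fun tau => K tau (Ebas k l) i j)). exact: HK. exact: Hu.
apply: csum_ext => k. rewrite cint_csum //.
move=> l. apply: ccont_cex. apply: ccont_mult.
apply: (@ccont_sub_arg (fun tau => K tau (Ebas k l) i j)). exact: HK. exact: Hu.
Qed.

Lemma mcont_conv d (K : R -> Mat d -> Mat d) (u : R -> Mat d) :
  linfam K -> opcont K -> mcont u -> mcont (mconv K u).
Proof.
move=> HL HK Hu i j.
apply: (@ccont_ext (fun t => csum d (fun k => csum d (fun l => cconv (fun tau => K tau (Ebas k l) i j) (fun s => u s k l) t)))).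
  move=> t. by rewrite mconv_entry.
apply: ccont_csum => k. apply: ccont_csum => l. apply: ccont_conv. exact: HK. exact: Hu.
Qed.

Lemma mex_app d (K : R -> Mat d -> Mat d) (u : R -> Mat d) a b :
  linfam K -> opcont K -> mcont u -> mex (fun t => K t (u t)) a b.
Proof. move=> H1 H2 H3. apply: mcont_mex. exact: mcont_app. Qed.

Lemma mint_scale d c (f : R -> Mat d) a b : mex f a b -> mint (fun s => mscale c (f s)) a b = mscale c (mint f a b).
Proof. move=> H. apply: mat_ext => i j. rewrite /mint /mscale. exact: cint_cmul. Qed.

Lemma mconv_lin d (K M : R -> Mat d -> Mat d) tau :
  linfam K -> opcont K -> linfam M -> opcont M ->
  is_linear_map (fun x => mconv K (fun r => M r x) tau).
Proof.
move=> HLK HK HLM HM.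
have HKs : opcont (fun s => K (tau - s)) by exact: opcont_sub.
have HLKs : linfam (fun s => K (tau - s)) by move=> s; exact: HLK.
split.
- move=> x1 x2. rewrite /mconv -mint_add; [ | apply: (@mex_app d (fun s => K (tau - s)) (fun s => M s x1)) => //; exact: HM | apply: (@mex_app d (fun s => K (tau - s)) (fun s => M s x2)) => //; exact: HM].
  apply: mat_ext => i j. rewrite /mint. apply: cint_ext => s _.
  case: (HLM s) => Ha _. case: (HLK (tau - s)) => Ha' _. by rewrite Ha Ha'.
- move=> c x1. rewrite /mconv -mint_scale; last by apply: (@mex_app d (fun s => K (tau - s)) (fun s => M s x1)) => //; exact: HM.
  apply: mat_ext => i j. rewrite /mint. apply: cint_ext => s _.
  case: (HLM s) => _ Hs. case: (HLK (tau - s)) => _ Hs'. by rewrite Hs Hs'.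
Qed.

Lemma jgood_csum n (P : 'I_n -> R -> R -> C) : (forall k, jgood (P k)) -> jgood (fun x y => csum n (fun k => P k x y)).
Proof.
move=> H. rewrite /csum.
elim: (index_enum _) => [|k r IH].
- have -> : (fun x y => \big[Cplus/RtoC 0]_(k <- [::]) P k x y) = (fun _ _ => RtoC 0).
    apply: functional_extensionality => x; apply: functional_extensionality => y; by rewrite big_nil.
  exact: jgood_const.
- have -> : (fun x y => \big[Cplus/RtoC 0]_(j <- k :: r) P j x y) = (fun x y => Cplus (P k x y) (\big[Cplus/RtoC 0]_(j <- r) P j x y)).
    apply: functional_extensionality => x; apply: functional_extensionality => y; by rewrite big_cons.
  apply: jgood_plus; [exact: H | exact: IH].
Qed.

Lemma jgood_ext P Q : (forall x y, P x y = Q x y) -> jgood P -> jgood Q.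
Proof.
move=> H. have -> : Q = P by apply: functional_extensionality => x; apply: functional_extensionality => y; rewrite H. done.
Qed.

Lemma jgood_lin_app d (Lam : R -> Mat d -> Mat d) (u : R -> Mat d) i j :
  linfam Lam -> opcont Lam -> mcont u -> jgood (fun tau sg => Lam tau (u sg) i j).
Proof.
move=> HL HK Hu.
apply: (@jgood_ext (fun tau sg => csum d (fun k => csum d (fun l => Cmult (u sg k l) (Lam tau (Ebas k l) i j))))).
  move=> x y. by rewrite (@lin_expand d (Lam x) (u y) i j (HL x)).
apply: jgood_csum => k. apply: jgood_csum => l. apply: jgood_mult.
- apply: (@jgood_fy (fun sg => u sg k l)). exact: Hu.
- apply: (@jgood_fx (fun tau => Lam tau (Ebas k l) i j)). exact: HK.
Qed.

Lemma jgood_app_gen d (K : R -> Mat d -> Mat d) (V : R -> R -> Mat d) a b c i j :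
  linfam K -> opcont K -> (forall k l, jgood (fun x y => V x y k l)) ->
  jgood (fun x y => K (a * x + b * y + c) (V x y) i j).
Proof.
move=> HL HK HV.
apply: (@jgood_ext (fun x y => csum d (fun k => csum d (fun l => Cmult (V x y k l) (K (a * x + b * y + c) (Ebas k l) i j))))).
  move=> x y. by rewrite (@lin_expand d (K (a * x + b * y + c)) (V x y) i j (HL _)).
apply: jgood_csum => k. apply: jgood_csum => l. apply: jgood_mult.
- exact: HV.
- apply: (@jgood_lin (fun tau => K tau (Ebas k l) i j)). exact: HK.
Qed.

Definition qform d n (v : 'I_n -> 'I_d -> C) (X : 'I_n -> 'I_n -> Mat d) : C :=
  csum n (fun i => csum n (fun j => csum d (fun k => csum d (fun l =>
     Cmult (Cmult (Cconj (v i k)) (X i j k l)) (v j l))))).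

Lemma psd_iff d n X : psd_block d n X <-> forall v, Im (qform v X) = 0 /\ 0 <= Re (qform v X).
Proof. split => H v; exact: (H v). Qed.

Lemma qform_add d n v (X Y : 'I_n -> 'I_n -> Mat d) :
  qform v (fun i j => madd (X i j) (Y i j)) = Cplus (qform v X) (qform v Y).
Proof.
rewrite /qform -csum_plus. apply: csum_ext => i. rewrite -csum_plus. apply: csum_ext => j.
rewrite -csum_plus. apply: csum_ext => k. rewrite -csum_plus. apply: csum_ext => l.
rewrite /madd. ring.
Qed.

Lemma CP_comp d (P Q : Mat d -> Mat d) : CP P -> CP Q -> CP (fun x => P (Q x)).
Proof.
move=> [[Pa Ps] HP] [[Qa Qs] HQ]. split.
- split. move=> a b. by rewrite Qa Pa. move=> c a. by rewrite Qs Ps.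
- move=> n X HX. exact: (HP n _ (HQ n X HX)).
Qed.

Lemma CP_add d (P Q : Mat d -> Mat d) : CP P -> CP Q -> CP (fun x => madd (P x) (Q x)).
Proof.
move=> [HLP HP] [HLQ HQ]. split. exact: add_lin.
move=> n X HX. apply/psd_iff => v.
have := proj1 (@psd_iff _ _ _) (HP n X HX) v. have := proj1 (@psd_iff _ _ _) (HQ n X HX) v.
rewrite /ampl qform_add. rewrite /ampl. move=> [H1 H2] [H3 H4].
rewrite /Cplus /Re /Im /= in H1 H2 H3 H4 *. lra.
Qed.

Lemma cint_mul_both c1 c2 f a b : cex f a b ->
  cint (fun s => Cmult (Cmult c1 (f s)) c2) a b = Cmult (Cmult c1 (cint f a b)) c2.
Proof.
move=> H. rewrite (cint_ext (g := fun s => Cmult (Cmult c1 c2) (f s))); last by move=> x _; ring.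
rewrite cint_cmul //. ring.
Qed.

Lemma cex_mul_both c1 c2 f a b : cex f a b -> cex (fun s => Cmult (Cmult c1 (f s)) c2) a b.
Proof.
move=> H. apply: (cex_ext (f := fun s => Cmult (Cmult c1 c2) (f s))); first by move=> x _; ring.
exact: cex_cmul.
Qed.

Lemma CP_int d (Phi : R -> Mat d -> Mat d) t : 0 <= t ->
  (forall s, 0 <= s <= t -> CP (Phi s)) -> (forall x, mcont (fun s => Phi s x)) ->
  CP (fun x => mint (fun s => Phi s x) 0 t).
Proof.
move=> Ht HCP Hc.
have HL : forall s, 0 <= s <= t -> is_linear_map (Phi s) by move=> s Hs; case: (HCP s Hs).
split. split.
- move=> a b. rewrite -mint_add; try exact: mcont_mex.
  apply: mat_ext => i j. rewrite /mint. apply: cint_ext => s Hs.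
  have Hs' : 0 <= s <= t by move: Hs; rewrite /Rmin /Rmax; case: Rle_dec => _; lra.
  case: (HL s Hs') => Ha _. by rewrite Ha.
- move=> c a. rewrite -mint_scale; last exact: mcont_mex.
  apply: mat_ext => i j. rewrite /mint. apply: cint_ext => s Hs.
  have Hs' : 0 <= s <= t by move: Hs; rewrite /Rmin /Rmax; case: Rle_dec => _; lra.
  case: (HL s Hs') => _ Hsc. by rewrite Hsc.
move=> n X HX. apply/psd_iff => v.
have Hex : forall i j k l, cex (fun s => Phi s (X i j) k l) 0 t by move=> i j k l; apply: ccont_cex; exact: Hc.
have E : qform v (ampl n (fun x => mint (fun s => Phi s x) 0 t) X) = cint (fun s => qform v (ampl n (Phi s) X)) 0 t.
  rewrite /qform /ampl /mint.
  rewrite cint_csum; last first.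
    move=> i. apply: cex_csum => j. apply: cex_csum => k. apply: cex_csum => l. exact: cex_mul_both.
  apply: csum_ext => i. rewrite cint_csum; last first.
    move=> j. apply: cex_csum => k. apply: cex_csum => l. exact: cex_mul_both.
  apply: csum_ext => j. rewrite cint_csum; last first.
    move=> k. apply: cex_csum => l. exact: cex_mul_both.
  apply: csum_ext => k. rewrite cint_csum; last first.
    move=> l. exact: cex_mul_both.
  apply: csum_ext => l. by rewrite cint_mul_both.
have Hexq : cex (fun s => qform v (ampl n (Phi s) X)) 0 t.
  rewrite /qform /ampl. apply: cex_csum => i. apply: cex_csum => j. apply: cex_csum => k. apply: cex_csum => l. exact: cex_mul_both.
rewrite E. split.
- rewrite im_cint //.
  rewrite (RInt_ext _ (fun _ => 0)). rewrite RInt_const. rewrite /scal /= /mult /=. ring.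
  move=> s Hs. have Hs' : 0 <= s <= t by move: Hs; rewrite /Rmin /Rmax; case: Rle_dec => _; lra.
  case: (HCP s Hs') => _ H. exact: (proj1 (proj1 (@psd_iff _ _ _) (H n X HX) v)).
- rewrite re_cint //. apply: RInt_ge_0 => //. exact: ex_re.
  move=> s Hs. have Hs' : 0 <= s <= t by lra.
  case: (HCP s Hs') => _ H. exact: (proj2 (proj1 (@psd_iff _ _ _) (H n X HX) v)).
Qed.

Definition clim (u : nat -> C) (l : C) :=
  is_lim_seq (fun n => Re (u n)) (Re l) /\ is_lim_seq (fun n => Im (u n)) (Im l).

Lemma clim_plus u v a b : clim u a -> clim v b -> clim (fun n => Cplus (u n) (v n)) (Cplus a b).
Proof.
move=> [H1 H2] [H3 H4]. split.
- exact: (is_lim_seq_plus' _ _ _ _ H1 H3).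
- exact: (is_lim_seq_plus' _ _ _ _ H2 H4).
Qed.

Lemma clim_cmul c u a : clim u a -> clim (fun n => Cmult c (u n)) (Cmult c a).
Proof.
move=> [H1 H2]. split.
- rewrite re_mult. apply: (is_lim_seq_ext (fun n => Re c * Re (u n) - Im c * Im (u n))).
    move=> n. by rewrite re_mult.
  apply: is_lim_seq_minus'. exact: (is_lim_seq_scal_l _ (Re c) _ H1). exact: (is_lim_seq_scal_l _ (Im c) _ H2).
- rewrite im_mult. apply: (is_lim_seq_ext (fun n => Re c * Im (u n) + Im c * Re (u n))).
    move=> n. by rewrite im_mult.
  apply: is_lim_seq_plus'. exact: (is_lim_seq_scal_l _ (Re c) _ H2). exact: (is_lim_seq_scal_l _ (Im c) _ H1).
Qed.

Lemma clim_const c : clim (fun _ => c) c.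
Proof. split; exact: is_lim_seq_const. Qed.

Lemma clim_ext u v a : (forall n, u n = v n) -> clim u a -> clim v a.
Proof. move=> H [H1 H2]; split; apply: is_lim_seq_ext H1 || apply: is_lim_seq_ext H2; move=> n; by rewrite H. Qed.

Lemma clim_unique u a b : clim u a -> clim u b -> a = b.
Proof.
move=> [H1 H2] [H3 H4].
have E1 := is_lim_seq_unique _ _ H1. have E2 := is_lim_seq_unique _ _ H3.
have E3 := is_lim_seq_unique _ _ H2. have E4 := is_lim_seq_unique _ _ H4.
rewrite E1 in E2. rewrite E3 in E4. case: E2 => E2. case: E4 => E4.
case: a b E2 E4 {H1 H2 H3 H4 E1 E3} => [a1 a2] [b1 b2] /= -> -> //.
Qed.

Lemma clim_csum m (u : nat -> 'I_m -> C) (l : 'I_m -> C) :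
  (forall k, clim (fun n => u n k) (l k)) -> clim (fun n => csum m (u n)) (csum m l).
Proof.
move=> H. rewrite /csum.
elim: (index_enum _) => [|k r IH].
- apply: (clim_ext (u := fun _ => RtoC 0)). move=> n; by rewrite big_nil. rewrite big_nil. exact: clim_const.
- apply: (clim_ext (u := fun n => Cplus (u n k) (\big[Cplus/RtoC 0]_(j <- r) u n j))).
    move=> n; by rewrite big_cons.
  rewrite big_cons. apply: clim_plus; [exact: H | exact: IH].
Qed.

Lemma CP_lim d (Phin : nat -> Mat d -> Mat d) (Phi : Mat d -> Mat d) :
  (forall n, CP (Phin n)) -> (forall x i j, clim (fun n => Phin n x i j) (Phi x i j)) -> CP Phi.
Proof.
move=> HCP Hl.
split. split.
- move=> a b. apply: mat_ext => i j. apply: (clim_unique (Hl (madd a b) i j)).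
  apply: (clim_ext (u := fun n => Cplus (Phin n a i j) (Phin n b i j))).
    move=> n. case: (HCP n) => [[Ha _] _]. by rewrite Ha.
  exact: clim_plus.
- move=> c a. apply: mat_ext => i j. apply: (clim_unique (Hl (mscale c a) i j)).
  apply: (clim_ext (u := fun n => Cmult c (Phin n a i j))).
    move=> n. case: (HCP n) => [[_ Hs] _]. by rewrite Hs.
  exact: clim_cmul.
move=> n X HX. apply/psd_iff => v.
have Hq : clim (fun m => qform v (ampl n (Phin m) X)) (qform v (ampl n Phi X)).
  rewrite /qform /ampl. apply: clim_csum => i. apply: clim_csum => j. apply: clim_csum => k. apply: clim_csum => l.
  apply: (clim_ext (u := fun m => Cmult (Cmult (Cconj (v i k)) (v j l)) (Phin m (X i j) k l))).
    move=> m; ring.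
  have -> : Cmult (Cmult (Cconj (v i k)) (Phi (X i j) k l)) (v j l) = Cmult (Cmult (Cconj (v i k)) (v j l)) (Phi (X i j) k l) by ring.
  exact: clim_cmul.
case: Hq => Hre Him. split.
- have E := is_lim_seq_unique _ _ Him.
  have E2 : Lim_seq (fun m => Im (qform v (ampl n (Phin m) X))) = Lim_seq (fun _ => 0).
    apply: Lim_seq_ext => m. case: (HCP m) => _ H. exact: (proj1 (proj1 (@psd_iff _ _ _) (H n X HX) v)).
  rewrite E2 Lim_seq_const in E. by case: E.
- have := is_lim_seq_le (fun _ => 0) _ 0 _ _ (is_lim_seq_const 0) Hre. apply.
  move=> m. case: (HCP m) => _ H. exact: (proj2 (proj1 (@psd_iff _ _ _) (H n X HX) v)).
Qed.

Lemma Rplus_assoc' : associative Rplus. Proof. move=> x y z; ring. Qed.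
Lemma Rplus_comm' : commutative Rplus. Proof. move=> x y; ring. Qed.
Lemma Rplus_0_l' : left_id 0 Rplus. Proof. move=> x; ring. Qed.
HB.instance Definition _ := Monoid.isComLaw.Build R 0 Rplus Rplus_assoc' Rplus_comm' Rplus_0_l'.

Definition rsum n (f : 'I_n -> R) : R := \big[Rplus/0]_(i < n) f i.

Lemma rsum_ind n (P : R -> Prop) (f : 'I_n -> R) : P 0 -> (forall x y, P x -> P y -> P (x + y)) ->
  (forall i, P (f i)) -> P (rsum f).
Proof. move=> H0 Hp Hf. rewrite /rsum. by apply: big_ind. Qed.

Lemma rsum_nonneg n (f : 'I_n -> R) : (forall i, 0 <= f i) -> 0 <= rsum f.
Proof. move=> H. apply: rsum_ind => //. lra. move=> x y Hx Hy; exact: Rplus_le_le_0_compat. Qed.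

Lemma rsum_le n (f g : 'I_n -> R) : (forall i, f i <= g i) -> rsum f <= rsum g.
Proof.
move=> H. rewrite /rsum. elim: (index_enum _) => [|k r IH]. rewrite !big_nil. exact: Rle_refl.
rewrite !big_cons /=. apply: Rplus_le_compat => //.
Qed.

Lemma rsum_term n (f : 'I_n -> R) i : (forall k, 0 <= f k) -> f i <= rsum f.
Proof.
move=> H. rewrite /rsum (bigD1 i) //=. have : 0 <= \big[Rplus/0]_(k < n | k != i) f k.
  apply: big_ind. lra. move=> x y Hx Hy; exact: Rplus_le_le_0_compat. move=> k _; exact: H.
move=> H1. apply: (Rle_trans _ (f i + 0)). lra. exact: (Rplus_le_compat_l _ _ _ H1).
Qed.

Lemma rsum_scal n c (f : 'I_n -> R) : rsum (fun i => c * f i) = c * rsum f.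
Proof.
rewrite /rsum. symmetry. apply: (big_morph (fun x => c * x)). move=> x y /=. exact: Rmult_plus_distr_l. exact: Rmult_0_r.
Qed.

Lemma Cmod_csum n (f : 'I_n -> C) : Cmod (csum n f) <= rsum (fun i => Cmod (f i)).
Proof.
rewrite /csum /rsum. elim: (index_enum _) => [|k r IH]. rewrite !big_nil Cmod_0. exact: Rle_refl.
rewrite !big_cons /=. apply: Rle_trans (Cmod_triangle _ _) _. exact: Rplus_le_compat_l.
Qed.

Lemma rsum_cont n (f : 'I_n -> R -> R) x : (forall i, continuity_pt (f i) x) -> continuity_pt (fun t => rsum (fun i => f i t)) x.
Proof.
move=> H. rewrite /rsum. elim: (index_enum _) => [|k r IH].
- have -> : (fun t => \big[Rplus/0]_(i <- [::]) f i t) = (fun _ => 0).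
    apply: functional_extensionality => t; by rewrite big_nil.
  apply: continuity_pt_const => ? ?; done.
- have -> : (fun t => \big[Rplus/0]_(j <- k :: r) f j t) = (fun t => f k t + \big[Rplus/0]_(j <- r) f j t).
    apply: functional_extensionality => t; by rewrite big_cons.
  exact: (continuity_pt_plus _ _ _ (H k) IH).
Qed.

Definition reim (c : C) : R := Rabs (Re c) + Rabs (Im c).

Lemma ccont_reim f x : ccont f -> continuity_pt (fun t => reim (f t)) x.
Proof.
move=> Hf. rewrite /reim. apply: (continuity_pt_plus (fun t => Rabs (Re (f t))) (fun t => Rabs (Im (f t)))).
- apply: (continuity_pt_comp (fun t => Re (f t)) Rabs). exact: (proj1 (Hf x)). exact: Rcontinuity_abs.
- apply: (continuity_pt_comp (fun t => Im (f t)) Rabs). exact: (proj2 (Hf x)). exact: Rcontinuity_abs.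
Qed.

Lemma cont_bound (g : R -> R) a b : (forall x, continuity_pt g x) -> exists M, forall x, a <= x <= b -> g x <= M.
Proof.
move=> Hg. case: (Rle_lt_dec a b) => Hab; last by exists 0 => x Hx; lra.
case: (continuity_ab_maj g a b Hab (fun c _ => Hg c)) => Mx [HM _]. exists (g Mx). exact: HM.
Qed.

Lemma mcont_bound d (u : R -> Mat d) a b : mcont u ->
  exists M, 0 <= M /\ forall s, a <= s <= b -> forall i j, Cmod (u s i j) <= M.
Proof.
move=> Hu.
set g := fun s => rsum (fun i => rsum (fun j => reim (u s i j))).
have Hg : forall x, continuity_pt g x.
  move=> x. apply: (rsum_cont (f := fun i s => rsum (fun j => reim (u s i j)))) => i.
  apply: (rsum_cont (f := fun j s => reim (u s i j))) => j. exact: ccont_reim.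
case: (cont_bound a b Hg) => M HM. exists (Rmax 0 M). split. exact: Rmax_l.
move=> s Hs i j. apply: Rle_trans (Rmax_r 0 M). apply: Rle_trans (HM s Hs).
apply: Rle_trans (Cmod_le_reim _) _. rewrite /g.
have Hn : forall k l, 0 <= reim (u s k l) by move=> k l; rewrite /reim; have := Rabs_pos (Re (u s k l)); have := Rabs_pos (Im (u s k l)); lra.
apply: Rle_trans (_ : reim (u s i j) <= rsum (fun j => reim (u s i j))) _.
  apply: (rsum_term (f := fun j => reim (u s i j))) => k. exact: Hn.
apply: (rsum_term (f := fun i => rsum (fun j => reim (u s i j)))) => k. apply: rsum_nonneg => l. exact: Hn.
Qed.

Definition opsum d (Phi : Mat d -> Mat d) : R :=
  rsum (fun i => rsum (fun j => rsum (fun k => rsum (fun l => Cmod (Phi (Ebas k l) i j))))).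

Lemma opsum_nonneg d (Phi : Mat d -> Mat d) : 0 <= opsum Phi.
Proof. apply: rsum_nonneg => i; apply: rsum_nonneg => j; apply: rsum_nonneg => k; apply: rsum_nonneg => l. exact: Cmod_ge_0. Qed.

Lemma op_bound d (Phi : Mat d -> Mat d) x beta : is_linear_map Phi -> 0 <= beta ->
  (forall k l, Cmod (x k l) <= beta) -> forall i j, Cmod (Phi x i j) <= opsum Phi * beta.
Proof.
move=> HL Hb Hx i j. rewrite lin_expand //.
apply: Rle_trans (Cmod_csum _) _.
apply: Rle_trans (_ : rsum (fun k => rsum (fun l => beta * Cmod (Phi (Ebas k l) i j))) <= _).
  apply: rsum_le => k. apply: Rle_trans (Cmod_csum _) _. apply: rsum_le => l.
  rewrite Cmod_mult. apply: Rmult_le_compat_r. exact: Cmod_ge_0. exact: Hx.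
have -> : rsum (fun k => rsum (fun l => beta * Cmod (Phi (Ebas k l) i j))) = beta * rsum (fun k => rsum (fun l => Cmod (Phi (Ebas k l) i j))).
  rewrite -rsum_scal. f_equal. apply: functional_extensionality => k. by rewrite rsum_scal.
rewrite Rmult_comm. apply: Rmult_le_compat_r => //.
have Hn : forall i j k l, 0 <= Cmod (Phi (Ebas k l) i j) by move=> *; exact: Cmod_ge_0.
apply: Rle_trans (_ : _ <= rsum (fun j => rsum (fun k => rsum (fun l => Cmod (Phi (Ebas k l) i j))))) _.
  apply: (rsum_term (f := fun j => rsum (fun k => rsum (fun l => Cmod (Phi (Ebas k l) i j))))) => j'.
  apply: rsum_nonneg => k; apply: rsum_nonneg => l; exact: Hn.
apply: (rsum_term (f := fun i => rsum (fun j => rsum (fun k => rsum (fun l => Cmod (Phi (Ebas k l) i j)))))) => i'.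
apply: rsum_nonneg => j'; apply: rsum_nonneg => k; apply: rsum_nonneg => l; exact: Hn.
Qed.

Lemma fam_bound d (K : R -> Mat d -> Mat d) a b : opcont K ->
  exists c, 0 <= c /\ forall tau, a <= tau <= b -> opsum (K tau) <= c.
Proof.
move=> HK.
set g := fun tau => rsum (fun i => rsum (fun j => rsum (fun k => rsum (fun l => reim (K tau (Ebas k l) i j))))).
have Hg : forall x, continuity_pt g x.
  move=> x. apply: (rsum_cont (f := fun i s => rsum (fun j => rsum (fun k => rsum (fun l => reim (K s (Ebas k l) i j)))))) => i.
  apply: (rsum_cont (f := fun j s => rsum (fun k => rsum (fun l => reim (K s (Ebas k l) i j))))) => j.
  apply: (rsum_cont (f := fun k s => rsum (fun l => reim (K s (Ebas k l) i j)))) => k.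
  apply: (rsum_cont (f := fun l s => reim (K s (Ebas k l) i j))) => l. apply: ccont_reim. exact: HK.
case: (cont_bound a b Hg) => M HM. exists (Rmax 0 M). split. exact: Rmax_l.
move=> tau Htau. apply: Rle_trans (Rmax_r 0 M). apply: Rle_trans (HM tau Htau).
rewrite /opsum /g. apply: rsum_le => i; apply: rsum_le => j; apply: rsum_le => k; apply: rsum_le => l.
exact: Cmod_le_reim.
Qed.

Definition PB d (u : R -> Mat d) K n T := forall s, 0 <= s <= T -> forall i j, Cmod (u s i j) <= K * s ^ n.

Lemma cint_poly f t K n : 0 <= t -> cex f 0 t -> (forall s, 0 <= s <= t -> Cmod (f s) <= K * s ^ n) ->
  Cmod (cint f 0 t) <= K * (t ^ S n / INR (S n)).
Proof.
move=> Ht Hf Hb. rewrite Cmod_norm.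
have Hi : is_RInt (fun s => K * s ^ n) 0 t (K * (t ^ S n / INR (S n))).
  have H := is_RInt_scal _ _ _ K _ (is_RInt_pow 0 t n).
  have E : scal K (t ^ S n / INR (S n) - 0 ^ S n / INR (S n)) = K * (t ^ S n / INR (S n)).
    rewrite /scal /= /mult /=. rewrite Rmult_0_l /Rdiv Rmult_0_l Rminus_0_r. done.
  rewrite -E. exact: H.
apply: (norm_RInt_le (V:=C_R_NormedModule) f (fun s => K * s ^ n) 0 t) => //.
- move=> x Hx. rewrite -Cmod_norm. exact: Hb.
- exact: cex_cis.
Qed.

Lemma PB_mint d (g : R -> Mat d) K n T : mcont g -> PB g K n T -> PB (fun t => mint g 0 t) (K / INR (S n)) (S n) T.
Proof.
move=> Hg HB s Hs i j. rewrite /mint.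
apply: Rle_trans (cint_poly (K := K) (n := n) _ _ _) _.
- lra.
- exact: ccont_cex.
- move=> x Hx. apply: HB. lra.
- rewrite /Rdiv. apply: Req_le. ring.
Qed.

Lemma PB_lin d (L : Mat d -> Mat d) (u : R -> Mat d) K n T : is_linear_map L -> 0 <= K ->
  PB u K n T -> PB (fun s => L (u s)) (opsum L * K) n T.
Proof.
move=> HL HK HB s Hs i j. rewrite Rmult_assoc. apply: op_bound => //.
apply: Rmult_le_pos => //. apply: pow_le. lra.
move=> k l. exact: HB.
Qed.

Lemma PB_conv d (Kf : R -> Mat d -> Mat d) (u : R -> Mat d) c K n T :
  linfam Kf -> opcont Kf -> 0 <= K -> (forall tau, 0 <= tau <= T -> opsum (Kf tau) <= c) ->
  mcont u -> PB u K n T -> PB (mconv Kf u) (c * K / INR (S n)) (S n) T.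
Proof.
move=> HL HK HK0 Hc Hu HB s Hs i j. rewrite /mconv /mint.
apply: Rle_trans (cint_poly (K := c * K) (n := n) _ _ _) _.
- lra.
- apply: ccont_cex. apply: (@mcont_app d (fun r => Kf (s - r)) u) => //.
  exact: opcont_sub.
- move=> x Hx. have Hb : 0 <= K * x ^ n by apply: Rmult_le_pos => //; apply: pow_le; lra.
  apply: Rle_trans (op_bound (HL (s - x)) Hb (fun k l => HB x ltac:(lra) k l) i j) _.
  rewrite -Rmult_assoc. apply: Rmult_le_compat_r. apply: pow_le; lra.
  apply: Rmult_le_compat_r => //. apply: Hc. lra.
- rewrite /Rdiv. apply: Req_le. ring.
Qed.

Lemma PB_add d (u v : R -> Mat d) K1 K2 n T : PB u K1 n T -> PB v K2 n T -> PB (fun s => madd (u s) (v s)) (K1 + K2) n T.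
Proof.
move=> H1 H2 s Hs i j. rewrite /madd. apply: Rle_trans (Cmod_triangle _ _) _.
have := H1 s Hs i j. have := H2 s Hs i j. lra.
Qed.

Lemma PB_down d (u : R -> Mat d) K n T : 0 <= K -> PB u K (S n) T -> PB u (K * T) n T.
Proof.
move=> HK H s Hs i j. apply: Rle_trans (H s Hs i j) _. rewrite /=.
have := pow_le s n (proj1 Hs). case: Hs => Hs1 Hs2. move=> Hp.
have : 0 <= K * s ^ n by apply: Rmult_le_pos.
nra.
Qed.

Lemma PB_mono d (u : R -> Mat d) K K' n T : K <= K' -> PB u K n T -> PB u K' n T.
Proof.
move=> HK H s Hs i j. apply: Rle_trans (H s Hs i j) _. apply: Rmult_le_compat_r => //. apply: pow_le; lra.
Qed.

Lemma PB_ext d (u v : R -> Mat d) K n T : (forall s, 0 <= s <= T -> u s = v s) -> PB u K n T -> PB v K n T.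
Proof. move=> E H s Hs i j. rewrite -E //. exact: H. Qed.

Lemma INR_S_ge1 n : 1 <= INR (S n).
Proof. rewrite S_INR. have := pos_INR n. lra. Qed.

Lemma lim_pow_fact M x : is_lim_seq (fun n => M * (x ^ n / INR (Factorial.fact n))) 0.
Proof.
have H := proj2 (is_lim_seq_Reals _ _) (cv_speed_pow_fact x).
have := is_lim_seq_scal_l _ M _ H. rewrite /= Rmult_0_r. done.
Qed.

Lemma Cmod_le_lim (z : C) (b : nat -> R) : is_lim_seq b 0 -> (forall n, Cmod z <= b n) -> z = RtoC 0.
Proof.
move=> Hb Hz. have H := is_lim_seq_le (fun _ => Cmod z) b (Cmod z) 0 Hz (is_lim_seq_const _) Hb.
simpl in H. have H0 := Cmod_ge_0 z. have : Cmod z = 0 by lra.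
move/Cmod_eq_0. done.
Qed.

Lemma volterra_unique d (L : Mat d -> Mat d) (Z : R -> Mat d -> Mat d) (e : R -> Mat d) :
  is_linear_map L -> linfam Z -> opcont Z -> mcont e ->
  (forall t, 0 <= t -> e t = mint (fun s => madd (L (e s)) (mconv Z e s)) 0 t) ->
  forall t, 0 <= t -> e t = mzero d.
Proof.
move=> HL HZl HZ He Heq t Ht.
case: (mcont_bound 0 t He) => M [HM0 HM].
case: (fam_bound 0 t HZ) => cZ [HcZ0 HcZ].
set cL := opsum L. have HcL : 0 <= cL by exact: opsum_nonneg.
set C := cL + cZ * t.
have HC : 0 <= C by rewrite /C; nra.
have Hg : mcont (fun s => madd (L (e s)) (mconv Z e s)).
  apply: mcont_add. apply: (@mcont_app d (fun _ => L) e) => //. move=> x; exact: mcont_const.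
  exact: mcont_conv.
have Hind : forall n, PB e (M * C ^ n / INR (Factorial.fact n)) n t.
  elim=> [|n IH].
  - move=> s Hs i j. rewrite /= /Rdiv Rinv_1 !Rmult_1_r. exact: HM.
  - set Kn := M * C ^ n / INR (Factorial.fact n).
    have HKn : 0 <= Kn by rewrite /Kn; apply: Rmult_le_pos; [apply: Rmult_le_pos => //; apply: pow_le | apply: Rlt_le; apply: Rinv_0_lt_compat; apply: INR_fact_lt_0].
    have H1 := PB_lin HL HKn IH.
    have H2 := PB_conv HZl HZ HKn (fun tau Htau => HcZ tau Htau) He IH.
    have HKn2 : 0 <= cZ * Kn / INR (S n) by apply: Rmult_le_pos; [nra | apply: Rlt_le; apply: Rinv_0_lt_compat; apply: lt_0_INR; lia].
    have H3 := PB_down HKn2 H2.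
    have H4 := PB_add H1 H3.
    have H5 : PB (fun s => madd (L (e s)) (mconv Z e s)) (C * Kn) n t.
      apply: PB_mono H4. rewrite /C /cL.
      have Hi : cZ * Kn / INR (S n) * t <= cZ * Kn * t.
        rewrite /Rdiv. have := INR_S_ge1 n. move=> H1n.
        have : / INR (S n) <= 1. rewrite -Rinv_1. apply: Rinv_le_contravar; lra.
        move=> Hinv. have : 0 <= cZ * Kn * t by apply: Rmult_le_pos; [apply: Rmult_le_pos|]; lra. nra.
      nra.
    have H6 := PB_mint Hg H5.
    apply: (PB_ext (u := fun t0 => mint (fun s => madd (L (e s)) (mconv Z e s)) 0 t0)).
      move=> s Hs. rewrite -Heq //. lra.
    have -> : M * C ^ S n / INR (Factorial.fact (S n)) = C * Kn / INR (S n).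
      rewrite /Kn fact_simpl mult_INR [C ^ S n]/=. field. split; [apply: INR_fact_neq_0 | apply: not_0_INR; lia].
    exact: H6.
apply: mat_ext => i j. rewrite /mzero.
apply: (Cmod_le_lim (b := fun n => M * ((C * t) ^ n / INR (Factorial.fact n)))).
  exact: lim_pow_fact.
move=> n. apply: Rle_trans (Hind n t ltac:(lra) i j) _. rewrite Rpow_mult_distr. apply: Req_le. rewrite /Rdiv. ring.
Qed.

Lemma clim_zero_of_bound (z : nat -> C) (b : nat -> R) : is_lim_seq b 0 -> (forall n, Cmod (z n) <= b n) ->
  clim z (RtoC 0).
Proof.
move=> Hb Hz. have Hnb : is_lim_seq (fun n => - b n) 0.
  have := proj1 (is_lim_seq_opp _ _) Hb. by rewrite /= Ropp_0.
split => /=.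
- apply: (is_lim_seq_le_le (fun n => - b n) _ b) => // n.
  have := Hz n. have := re_le_Cmod (z n). rewrite /Re. split_Rabs; lra.
- apply: (is_lim_seq_le_le (fun n => - b n) _ b) => // n.
  have := Hz n. have := im_le_Cmod (z n). rewrite /Im. split_Rabs; lra.
Qed.

Lemma remainder_lim d (Kn Kb : R -> Mat d -> Mat d) (e : nat -> R -> Mat d) t :
  linfam Kn -> opcont Kn -> linfam Kb -> opcont Kb -> (forall n, mcont (e n)) ->
  (forall n s, 0 <= s -> e (S n) s = mconv Kn (mconv Kb (e n)) s) -> 0 <= t ->
  forall i j, clim (fun n => e n t i j) (RtoC 0).
Proof.
move=> HLn HKn HLb HKb He Heq Ht i j.
case: (mcont_bound 0 t (He 0%nat)) => M [HM0 HM].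
case: (fam_bound 0 t HKn) => cN [HcN0 HcN].
case: (fam_bound 0 t HKb) => cB [HcB0 HcB].
set C := cN * cB * t.
have HC : 0 <= C by rewrite /C; apply: Rmult_le_pos; [apply: Rmult_le_pos|]; lra.
have Hind : forall n, PB (e n) (M * C ^ n / INR (Factorial.fact n)) n t.
  elim=> [|n IH].
  - move=> s Hs i' j'. rewrite /= /Rdiv Rinv_1 !Rmult_1_r. exact: HM.
  - set Kk := M * C ^ n / INR (Factorial.fact n).
    have HKk : 0 <= Kk by rewrite /Kk; apply: Rmult_le_pos; [apply: Rmult_le_pos => //; apply: pow_le | apply: Rlt_le; apply: Rinv_0_lt_compat; apply: INR_fact_lt_0].
    have H1 := PB_conv HLb HKb HKk (fun tau Htau => HcB tau Htau) (He n) IH.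
    have HK1 : 0 <= cB * Kk / INR (S n) by apply: Rmult_le_pos; [nra | apply: Rlt_le; apply: Rinv_0_lt_compat; apply: lt_0_INR; lia].
    have H2 := PB_conv HLn HKn HK1 (fun tau Htau => HcN tau Htau) (mcont_conv HLb HKb (He n)) H1.
    have HK2 : 0 <= cN * (cB * Kk / INR (S n)) / INR (S (S n)) by apply: Rmult_le_pos; [nra | apply: Rlt_le; apply: Rinv_0_lt_compat; apply: lt_0_INR; lia].
    have H3 := PB_down HK2 H2.
    have H4 : PB (mconv Kn (mconv Kb (e n))) (C * Kk / INR (S n)) (S n) t.
      apply: PB_mono H3. rewrite /C /Rdiv.
      have H1n := INR_S_ge1 (S n).
      have Hinv : / INR (S (S n)) <= 1 by rewrite -Rinv_1; apply: Rinv_le_contravar; lra.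
      have Hinv0 : 0 <= / INR (S (S n)) by apply: Rlt_le; apply: Rinv_0_lt_compat; lra.
      have Hi1 : 0 <= / INR (S n) by apply: Rlt_le; apply: Rinv_0_lt_compat; apply: lt_0_INR; lia.
      have Hq : 0 <= cB * Kk * / INR (S n) by apply: Rmult_le_pos => //; nra.
      have Hp : 0 <= cN * (cB * Kk * / INR (S n)) * t by apply: Rmult_le_pos; [apply: Rmult_le_pos|]; lra.
      have -> : cN * (cB * Kk * / INR (S n)) * / INR (S (S n)) * t = (cN * (cB * Kk * / INR (S n)) * t) * / INR (S (S n)) by ring.
      have -> : cN * cB * t * Kk * / INR (S n) = (cN * (cB * Kk * / INR (S n)) * t) * 1 by ring.
      apply: Rmult_le_compat_l => //.
    apply: (PB_ext (u := mconv Kn (mconv Kb (e n)))).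
      move=> s Hs. rewrite Heq //. lra.
    have -> : M * C ^ S n / INR (Factorial.fact (S n)) = C * Kk / INR (S n).
      rewrite /Kk fact_simpl mult_INR [C ^ S n]/=. field. split; [apply: INR_fact_neq_0 | apply: not_0_INR; lia].
    exact: H4.
apply: (clim_zero_of_bound (b := fun n => M * ((C * t) ^ n / INR (Factorial.fact n)))).
  exact: lim_pow_fact.
move=> n. apply: Rle_trans (Hind n t ltac:(lra) i j) _. rewrite Rpow_mult_distr. apply: Req_le. rewrite /Rdiv. ring.
Qed.

Definition msub d (x y : Mat d) : Mat d := fun i j => Cminus (x i j) (y i j).

Lemma lin_sub d (Phi : Mat d -> Mat d) x y : is_linear_map Phi -> Phi (msub x y) = msub (Phi x) (Phi y).
Proof.
move=> [Ha Hs]. have -> : msub x y = madd x (mscale (RtoC (-1)) y).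
  apply: mat_ext => i j. rewrite /msub /madd /mscale /Cminus. ring.
rewrite Ha Hs. apply: mat_ext => i j. rewrite /msub /madd /mscale /Cminus. ring.
Qed.

Lemma mcont_sub d (u v : R -> Mat d) : mcont u -> mcont v -> mcont (fun t => msub (u t) (v t)).
Proof. move=> Hu Hv i j. exact: ccont_minus. Qed.

Lemma mconv_add_fun d (K : R -> Mat d -> Mat d) u v t : linfam K -> opcont K -> mcont u -> mcont v ->
  mconv K (fun s => madd (u s) (v s)) t = madd (mconv K u t) (mconv K v t).
Proof.
move=> HL HK Hu Hv. rewrite /mconv -mint_add.
- apply: mat_ext => i j. rewrite /mint. apply: cint_ext => s _. case: (HL (t - s)) => Ha _. by rewrite Ha.
- apply: (@mex_app d (fun s => K (t - s)) u) => //. exact: opcont_sub.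
- apply: (@mex_app d (fun s => K (t - s)) v) => //. exact: opcont_sub.
Qed.

Lemma mconv_sub_fun d (K : R -> Mat d -> Mat d) u v t : linfam K -> opcont K -> mcont u -> mcont v ->
  mconv K (fun s => msub (u s) (v s)) t = msub (mconv K u t) (mconv K v t).
Proof.
move=> HL HK Hu Hv. apply: mat_ext => i j. rewrite /mconv /mint /msub.
rewrite -cint_minus.
- apply: cint_ext => s _. by rewrite (lin_sub _ _ (HL (t - s))).
- apply: ccont_cex. apply: (@mcont_app d (fun s => K (t - s)) u) => //. exact: opcont_sub.
- apply: ccont_cex. apply: (@mcont_app d (fun s => K (t - s)) v) => //. exact: opcont_sub.
Qed.

Definition Lam d (L : Mat d -> Mat d) (Z N : R -> Mat d -> Mat d) (tau : R) (x : Mat d) : Mat d :=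
  madd (L (N tau x)) (mconv Z (fun r => N r x) tau).

Lemma Lam_lin d L (Z N : R -> Mat d -> Mat d) : is_linear_map L -> linfam Z -> opcont Z -> linfam N -> opcont N ->
  linfam (Lam L Z N).
Proof.
move=> HL HZl HZ HNl HN tau. rewrite /Lam.
apply: (@add_lin d (fun x => L (N tau x)) (fun x => mconv Z (fun r => N r x) tau)).
- case: HL => La Ls. case: (HNl tau) => Na Ns. split.
  move=> x y; by rewrite Na La. move=> c x; by rewrite Ns Ls.
- exact: mconv_lin.
Qed.

Lemma Lam_cont d L (Z N : R -> Mat d -> Mat d) : is_linear_map L -> linfam Z -> opcont Z -> linfam N -> opcont N ->
  opcont (Lam L Z N).
Proof.
move=> HL HZl HZ HNl HN x. rewrite /Lam. apply: mcont_add.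
- apply: (@mcont_app d (fun _ => L) (fun tau => N tau x)) => //. move=> z; exact: mcont_const.
- apply: mcont_conv => //.
Qed.

Lemma jgood_swap P : jgood P -> jgood (fun x y => P y x).
Proof.
move=> H. have := jgood_compose 0 1 1 0 H. apply: jgood_ext => x y.
have -> : 0 * x + 1 * y = y by ring. have -> : 1 * x + 0 * y = x by ring. done.
Qed.

Lemma inner_identity d L (Z N : R -> Mat d -> Mat d) (y : R -> Mat d) s i j :
  is_linear_map L -> linfam Z -> opcont Z -> linfam N -> opcont N -> mcont y ->
  cint (fun sg => Lam L Z N (s - sg) (y sg) i j) 0 s =
  Cplus (L (mconv N y s) i j) (mconv Z (mconv N y) s i j).
Proof.
move=> HL HZl HZ HNl HN Hy.
have HNs : forall c, opcont (fun r => N (c - r)) by move=> c; exact: opcont_sub.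
have HJ : forall k l, jgood (fun r sg => N r (y sg) k l) by move=> k l; exact: jgood_lin_app.
have HP : jgood (fun r sg => Z (-1 * r + -1 * sg + s) (N r (y sg)) i j).
  exact: jgood_app_gen.
rewrite /Lam /madd. rewrite cint_plus.
- f_equal.
  + rewrite /mconv. rewrite (lin_mint HL); last by apply: (@mex_app d (fun sg => N (s - sg)) y) => //.
    done.
  + rewrite /mconv /mint.
    have E1 := TF s HP.
    rewrite (cint_ext (g := fun sg => cint (fun r => Z (-1 * r + -1 * sg + s) (N r (y sg)) i j) 0 (s - sg))); last first.
      move=> sg _. apply: cint_ext => r _. have -> : s - sg - r = -1 * r + -1 * sg + s by ring. done.
    rewrite E1. apply: cint_ext => rho _.
    rewrite (cint_ext (g := fun sg => Z (s - rho) (N (rho - sg) (y sg)) i j)); last first.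
      move=> sg _. have -> : -1 * (rho - sg) + -1 * sg + s = s - rho by ring. done.
    have := lin_mint (f := fun sg => N (rho - sg) (y sg)) (a := 0) (b := rho) (HZl (s - rho)).
    move=> H. rewrite H. done.
    apply: (@mex_app d (fun sg => N (rho - sg)) y) => //.
- apply: ccont_cex. apply: (@mcont_app d (fun _ => L) (fun sg => N (s - sg) (y sg))).
  move=> _; exact: HL. move=> z; exact: mcont_const.
  apply: (@mcont_app d (fun sg => N (s - sg)) y) => //.
- apply: ccont_cex.
  have HP2 : jgood (fun sg r => Z (-1 * sg + -1 * r + s) (N r (y sg)) i j).
    apply: jgood_app_gen => // k l. exact: jgood_swap.
  have := pc_gen 0 0 (-1) s HP2.
  apply: ccont_ext => sg. rewrite /mconv /mint.
  have -> : 0 * sg + 0 = 0 by ring. have -> : -1 * sg + s = s - sg by ring.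
  apply: cint_ext => r _. have -> : -1 * sg + -1 * r + s = s - sg - r by ring. done.
Qed.

Definition IntN d (L : Mat d -> Mat d) (Z N : R -> Mat d -> Mat d) :=
  forall x t, 0 <= t -> N t x = madd x (mint (fun s => Lam L Z N s x) 0 t).

Lemma outer_identity d L (Z N : R -> Mat d -> Mat d) (y : R -> Mat d) t i j :
  is_linear_map L -> linfam Z -> opcont Z -> linfam N -> opcont N -> mcont y -> IntN L Z N -> 0 <= t ->
  mconv N y t i j = Cplus (cint (fun s => y s i j) 0 t) (cint (fun s => cint (fun sg => Lam L Z N (s - sg) (y sg) i j) 0 s) 0 t).
Proof.
move=> HL HZl HZ HNl HN Hy HIN Ht.
have HLl := Lam_lin HL HZl HZ HNl HN. have HLc := Lam_cont HL HZl HZ HNl HN.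
have HJ : jgood (fun tau sg => Lam L Z N tau (y sg) i j) by exact: jgood_lin_app.
rewrite /mconv /mint.
rewrite (cint_ext (g := fun sg => Cplus (y sg i j) (cint (fun tau => Lam L Z N tau (y sg) i j) 0 (t - sg)))); last first.
  move=> sg Hsg. rewrite HIN. done.
  move: Hsg; rewrite /Rmin /Rmax; case: Rle_dec => _; lra.
rewrite cint_plus.
- f_equal. exact: TF.
- apply: ccont_cex. exact: Hy.
- apply: ccont_cex. have := pc_gen 0 0 (-1) t (jgood_swap HJ).
  apply: ccont_ext => sg. have -> : 0 * sg + 0 = 0 by ring. have -> : -1 * sg + t = t - sg by ring. done.
Qed.

Lemma identity d L (Z B N : R -> Mat d -> Mat d) (u : R -> Mat d) a :
  is_linear_map L -> linfam Z -> opcont Z -> linfam B -> opcont B -> linfam N -> opcont N -> mcont u ->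
  IntN L Z N ->
  (forall t, 0 <= t -> u t = madd a (mint (fun s => madd (madd (L (u s)) (mconv Z u s)) (mconv B u s)) 0 t)) ->
  forall t, 0 <= t -> u t = madd (N t a) (mconv N (mconv B u) t).
Proof.
move=> HL HZl HZ HBl HB HNl HN Hu HIN Iu.
set y := mconv B u.
have Hy : mcont y by exact: mcont_conv.
set w := fun t => madd (N t a) (mconv N y t).
have HNa : mcont (fun t => N t a) by exact: HN.
have Hny : mcont (mconv N y) by exact: mcont_conv.
have Hw : mcont w by exact: mcont_add.
have HLl := Lam_lin HL HZl HZ HNl HN. have HLc := Lam_cont HL HZl HZ HNl HN.
have HLop : forall (v : R -> Mat d), mcont v -> mcont (fun s => L (v s)).
  move=> v Hv. apply: (@mcont_app d (fun _ => L) v) => //. move=> z; exact: mcont_const.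
have Iw : forall t, 0 <= t -> w t = madd a (mint (fun s => madd (madd (L (w s)) (mconv Z w s)) (y s)) 0 t).
  move=> t Ht. apply: mat_ext => i j.
  have EF : forall s, (madd (madd (L (w s)) (mconv Z w s)) (y s)) i j =
      Cplus (Cplus (Lam L Z N s a i j) (y s i j)) (Cplus (L (mconv N y s) i j) (mconv Z (mconv N y) s i j)).
    move=> s. rewrite /w. case: HL => La _. rewrite La mconv_add_fun //. rewrite /Lam /madd. ring.
  have HG : ccont (fun s => Cplus (L (mconv N y s) i j) (mconv Z (mconv N y) s i j)).
    apply: ccont_plus. exact: HLop. exact: (mcont_conv HZl HZ Hny).
  rewrite {1}/madd /mint (cint_ext (g := fun s => Cplus (Cplus (Lam L Z N s a i j) (y s i j)) (Cplus (L (mconv N y s) i j) (mconv Z (mconv N y) s i j)))); last by move=> s _; exact: EF.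
  rewrite cint_plus; [| apply: ccont_cex; apply: ccont_plus; [exact: HLc | exact: Hy] | exact: ccont_cex].
  rewrite cint_plus; [| exact: ccont_cex (HLc a i j) | exact: ccont_cex (Hy i j)].
  rewrite (cint_ext (f := fun s => Cplus (L (mconv N y s) i j) (mconv Z (mconv N y) s i j)) (g := fun s => cint (fun sg => Lam L Z N (s - sg) (y sg) i j) 0 s)); last first.
    move=> s _. by rewrite inner_identity.
  rewrite /w /madd. rewrite (@outer_identity d L Z N y t i j) //. rewrite (HIN a t Ht). rewrite /madd /mint. ring.
have He : forall t, 0 <= t -> msub (w t) (u t) = mint (fun s => madd (L (msub (w s) (u s))) (mconv Z (fun s0 => msub (w s0) (u s0)) s)) 0 t.
  move=> t Ht. rewrite {1}(Iw t Ht) {1}(Iu t Ht). apply: mat_ext => i j. rewrite /msub /madd /mint.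
  have -> : forall X Y : C, Cminus (Cplus (a i j) X) (Cplus (a i j) Y) = Cminus X Y by move=> X Y; rewrite /Cminus; ring.
  rewrite -cint_minus.
  - apply: cint_ext => s _. rewrite (lin_sub _ _ HL) mconv_sub_fun //. rewrite /msub /madd /y. ring.
  - apply: ccont_cex. apply: ccont_plus. apply: ccont_plus. exact: HLop. exact: mcont_conv. exact: Hy.
  - apply: ccont_cex. apply: ccont_plus. apply: ccont_plus. exact: HLop. exact: mcont_conv. exact: Hy.
move=> t Ht. have := volterra_unique HL HZl HZ (mcont_sub Hw Hu) He Ht.
move=> E. apply: mat_ext => i j. have := f_equal (fun M => M i j) E. rewrite /msub /mzero /=.
move=> E2. symmetry. exact: Cminus_eq0 E2.
Qed.

Definition Tm d (N B : R -> Mat d -> Mat d) (Q : R -> Mat d -> Mat d) : R -> Mat d -> Mat d :=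
  fun t x => mconv N (mconv B (fun r => Q r x)) t.

Fixpoint Pic d (N B : R -> Mat d -> Mat d) (n : nat) : R -> Mat d -> Mat d :=
  match n with
  | O => N
  | S m => fun t x => madd (N t x) (Tm N B (Pic N B m) t x)
  end.

Lemma Tm_CP d (N B Q : R -> Mat d -> Mat d) t :
  linfam N -> opcont N -> linfam B -> opcont B -> (forall s, CP (N s)) -> (forall s, CP (B s)) ->
  opcont Q -> (forall r, 0 <= r -> CP (Q r)) -> 0 <= t -> CP (Tm N B Q t).
Proof.
move=> HNl HN HBl HB HNc HBc HQ HQc Ht.
have HBs : forall s, opcont (fun r => B (s - r)) by move=> s; exact: opcont_sub.
have HNs : opcont (fun s => N (t - s)) by exact: opcont_sub.
have Hin : forall s, 0 <= s -> CP (fun x => mconv B (fun r => Q r x) s).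
  move=> s Hs. rewrite /mconv.
  apply: (@CP_int d (fun r x => B (s - r) (Q r x)) s) => //.
  - move=> r Hr. apply: (@CP_comp d (B (s - r)) (Q r)). exact: HBc. apply: HQc. lra.
  - move=> x. exact: (@mcont_app d (fun r => B (s - r)) (fun r => Q r x) (fun r => HBl (s - r)) (HBs s) (HQ x)).
rewrite /Tm /mconv.
apply: (@CP_int d (fun s x => N (t - s) (mint (fun r => B (s - r) (Q r x)) 0 s)) t) => //.
- move=> s Hs. apply: (@CP_comp d (N (t - s)) (fun x => mint (fun r => B (s - r) (Q r x)) 0 s)).
  exact: HNc. exact: (Hin s (proj1 Hs)).
- move=> x. exact: (@mcont_app d (fun s => N (t - s)) (fun s => mint (fun r => B (s - r) (Q r x)) 0 s) (fun s => HNl (t - s)) HNs (@mcont_conv d B (fun r => Q r x) HBl HB (HQ x))).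
Qed.

Lemma Pic_props d (N B : R -> Mat d -> Mat d) n :
  linfam N -> opcont N -> linfam B -> opcont B -> (forall s, CP (N s)) -> (forall s, CP (B s)) ->
  opcont (Pic N B n) /\ forall t, 0 <= t -> CP (Pic N B n t).
Proof.
move=> HNl HN HBl HB HNc HBc. elim: n => [|n [IHc IHp]].
- split; [exact: HN | move=> t _ /=; exact: HNc].
- split.
  + move=> x /=. apply: mcont_add. exact: HN.
    rewrite /Tm. exact: (mcont_conv HNl HN (mcont_conv HBl HB (IHc x))).
  + move=> t Ht /=. apply: (@CP_add d (N t) (Tm N B (Pic N B n) t)). exact: HNc.
    exact: Tm_CP.
Qed.

Lemma core d (L : Mat d -> Mat d) (Z B N A : R -> Mat d -> Mat d) :
  is_linear_map L -> linfam Z -> opcont Z -> linfam B -> opcont B -> linfam N -> opcont N ->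
  (forall s, CP (B s)) -> (forall s, CP (N s)) ->
  (forall a, mcont (fun t => A t a)) ->
  (forall a t, 0 <= t -> A t a = madd a (mint (fun s => madd (L (A s a))
        (mint (fun r => madd (B (s - r) (A r a)) (Z (s - r) (A r a))) 0 s)) 0 t)) ->
  IntN L Z N ->
  forall t, 0 <= t -> CP (A t).
Proof.
move=> HL HZl HZ HBl HB HNl HN HBc HNc HA IA HIN t Ht.
have Hid : forall a s, 0 <= s -> A s a = madd (N s a) (mconv N (mconv B (fun r => A r a)) s).
  move=> a. apply: (identity (L := L) (Z := Z)) => // s Hs.
  rewrite {1}(IA a s Hs). apply: mat_ext => i j. rewrite /madd /mint.
  f_equal. apply: cint_ext => r _. rewrite /mconv /mint. rewrite cint_plus. ring.
  + apply: ccont_cex; exact: (@mcont_app d (fun q => B (r - q)) (fun q => A q a) (fun q => HBl (r - q)) (@opcont_sub d B r HB) (HA a) i j).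
  + apply: ccont_cex; exact: (@mcont_app d (fun q => Z (r - q)) (fun q => A q a) (fun q => HZl (r - q)) (@opcont_sub d Z r HZ) (HA a) i j).
have HP := fun n => Pic_props n HNl HN HBl HB HNc HBc.
apply: (@CP_lim d (fun n => Pic N B n t)).
  move=> n. exact: (proj2 (HP n) t Ht).
move=> a i j.
set e := fun n s => msub (A s a) (Pic N B n s a).
have He : forall n, mcont (e n).
  move=> n. apply: mcont_sub. exact: HA. exact: (proj1 (HP n)).
have Heq : forall n s, 0 <= s -> e (S n) s = mconv N (mconv B (e n)) s.
  move=> n s Hs. rewrite /e {1}(Hid a s Hs) /=.
  have -> : msub (madd (N s a) (mconv N (mconv B (fun r => A r a)) s)) (madd (N s a) (Tm N B (Pic N B n) s a))
          = msub (mconv N (mconv B (fun r => A r a)) s) (mconv N (mconv B (fun r => Pic N B n r a)) s).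
    apply: mat_ext => i' j'. rewrite /msub /madd /Tm /Cminus. ring.
  rewrite -mconv_sub_fun //; try (apply: mcont_conv => //); try exact: HA; try exact: (proj1 (HP n)).
  f_equal. apply: functional_extensionality => r.
  rewrite mconv_sub_fun //. exact: (proj1 (HP n)).
have Hl := remainder_lim HNl HN HBl HB He Heq Ht i j.
have := clim_plus (clim_const (A t a i j)) (clim_cmul (RtoC (-1)) Hl).
have -> : Cplus (A t a i j) (Cmult (RtoC (-1)) (RtoC 0)) = A t a i j by ring.
apply: clim_ext => n. rewrite /e /msub /Cminus. ring.
Qed.

Lemma ball_C_Cmod (z w : C) e : ball z e w -> Cmod (Cminus w z) < 2 * e.
Proof.
case: z w => [z1 z2] [w1 w2] [H1 H2].
change (Rabs (w1 - z1) < e) in H1. change (Rabs (w2 - z2) < e) in H2.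
apply: Rle_lt_trans (Cmod_le_reim _) _. rewrite /Cminus /Re /Im /=.
have -> : w1 + - z1 = w1 - z1 by ring. have -> : w2 + - z2 = w2 - z2 by ring. lra.
Qed.

Lemma ceps_of_cont (f : R -> C) t : continuous f t ->
  forall eps, 0 < eps -> exists del, 0 < del /\ forall y, Rabs (y - t) < del -> Cmod (Cminus (f y) (f t)) < eps.
Proof.
move=> H eps He. have He2 : 0 < eps / 2 by lra.
case: (proj1 (filterlim_locally f (f t)) H (mkposreal _ He2)) => del Hd.
exists del. split. exact: cond_pos. move=> y Hy.
have := ball_C_Cmod (Hd y Hy). simpl. lra.
Qed.

Lemma ceps_of_right (f : R -> C) : filterlim f (at_right 0) (locally (f 0)) ->
  forall eps, 0 < eps -> exists del, 0 < del /\ forall y, 0 < y < del -> Cmod (Cminus (f y) (f 0)) < eps.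
Proof.
move=> H eps He. have He2 : 0 < eps / 2 by lra.
case: (proj1 (filterlim_locally f (f 0)) H (mkposreal _ He2)) => del Hd.
exists del. split. exact: cond_pos. move=> y [Hy1 Hy2].
have Hb : ball 0 del y.
  change (Rabs (y - 0) < del). rewrite Rminus_0_r Rabs_pos_eq; lra.
have := ball_C_Cmod (Hd y Hb Hy1). simpl. lra.
Qed.

Lemma reg_cont (f : R -> C) : cont_nonneg f -> ccont (fun t => f (Rmax 0 t)).
Proof.
move=> [Hpos H0]. apply: ccont_of_eps => x0 eps He.
case: (Rtotal_order x0 0) => [Hx|[Hx|Hx]].
- exists (- x0). split. lra. move=> y Hy.
  have Hy0 : y < 0 by move: Hy; split_Rabs; lra.
  rewrite !Rmax_left; try lra. rewrite Cminus_eq_0' Cmod_0. done.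
- subst x0. case: (ceps_of_right H0 He) => del [Hd Hdel].
  exists del. split => // y Hy. rewrite (Rmax_left 0 0); last lra.
  case: (Rle_lt_dec y 0) => Hy0.
  + rewrite Rmax_left // Cminus_eq_0' Cmod_0. done.
  + rewrite Rmax_right; last lra. apply: Hdel. move: Hy; split_Rabs; lra.
- case: (ceps_of_cont (Hpos x0 Hx) He) => del [Hd Hdel].
  exists (Rmin del x0). split. apply: Rmin_pos; lra. move=> y Hy.
  have Hy1 : Rabs (y - x0) < del by apply: Rlt_le_trans Hy (Rmin_l _ _).
  have Hy2 : Rabs (y - x0) < x0 by apply: Rlt_le_trans Hy (Rmin_r _ _).
  have Hyp : 0 < y by move: Hy2; split_Rabs; lra.
  rewrite !Rmax_right; try lra. exact: Hdel.
Qed.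

Lemma Cmod_small_eq (z w : C) : (forall eps, 0 < eps -> Cmod (Cminus z w) < eps) -> z = w.
Proof.
move=> H. apply: Cminus_eq0. apply/Cmod_eq_0.
have H0 := Cmod_ge_0 (Cminus z w).
case: (Rle_lt_dec (Cmod (Cminus z w)) 0) => Hc. lra.
have := H _ Hc. lra.
Qed.

Lemma deriv_to_int (phi g : R -> C) t :
  cont_nonneg phi -> ccont g -> (forall s, 0 < s -> cderiv phi s (g s)) -> 0 <= t ->
  phi t = Cplus (phi 0) (cint g 0 t).
Proof.
move=> [Hpos H0] Hg Hd Ht.
set psi := fun s => Cminus (phi s) (cint g 0 s).
have Hdpsi : forall s, 0 < s -> cderiv psi s (RtoC 0).
  move=> s Hs. have := cderiv_minus (Hd s Hs) (ftc_c 0 s Hg). by rewrite Cminus_eq_0'.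
have Hconst : forall y, 0 < y -> y <= t -> psi y = psi t.
  move=> y Hy Hyt. case: (Rle_lt_or_eq_dec _ _ Hyt) => Hyt'; last by rewrite Hyt'.
  apply: (eq_is_derive (V:=C_R_NormedModule)) => // s Hs. apply: Hdpsi. lra.
case: (Rle_lt_or_eq_dec _ _ Ht) => Ht'; last first.
  subst t. rewrite cint_point. rewrite /Cplus /=. case: (phi 0) => p1 p2 /=. f_equal; ring.
suff : psi t = psi 0.
  rewrite /psi cint_point => E.
  have E2 : phi t = Cplus (cint g 0 t) (Cminus (phi 0) (RtoC 0)).
    rewrite -E /Cminus. ring.
  rewrite E2 /Cminus. ring.
apply: Cmod_small_eq => eps He.
have He2 : 0 < eps / 2 by lra.
case: (ceps_of_right H0 He2) => del [Hdel Hd1].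
case: (ccont_bound 0 1 Hg) => M [HM0 HM].
set y := Rmin (Rmin (del / 2) (t / 2)) (Rmin (1 / 2) (eps / (2 * (M + 1)))).
have Hy0 : 0 < y.
  rewrite /y. apply: Rmin_pos; apply: Rmin_pos; try lra. apply: Rdiv_lt_0_compat; lra.
have Hyd : y < del by have := Rmin_l (Rmin (del / 2) (t / 2)) (Rmin (1 / 2) (eps / (2 * (M + 1)))); have := Rmin_l (del / 2) (t / 2); rewrite -/y; lra.
have Hyt : y <= t by have := Rmin_l (Rmin (del / 2) (t / 2)) (Rmin (1 / 2) (eps / (2 * (M + 1)))); have := Rmin_r (del / 2) (t / 2); rewrite -/y; lra.
have Hy1 : y <= 1 by have := Rmin_r (Rmin (del / 2) (t / 2)) (Rmin (1 / 2) (eps / (2 * (M + 1)))); have := Rmin_l (1 / 2) (eps / (2 * (M + 1))); rewrite -/y; lra.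
have Hye : y <= eps / (2 * (M + 1)) by have := Rmin_r (Rmin (del / 2) (t / 2)) (Rmin (1 / 2) (eps / (2 * (M + 1)))); have := Rmin_r (1 / 2) (eps / (2 * (M + 1))); rewrite -/y; lra.
rewrite -(Hconst y Hy0 Hyt) /psi cint_point.
have -> : Cminus (Cminus (phi y) (cint g 0 y)) (Cminus (phi 0) (RtoC 0)) = Cplus (Cminus (phi y) (phi 0)) (Cmult (RtoC (-1)) (cint g 0 y)).
  rewrite /Cminus; ring.
apply: Rle_lt_trans (Cmod_triangle _ _) _. rewrite Cmod_mult Cmod_R Rabs_m1 Rmult_1_l.
have A1 := Hd1 y (conj Hy0 Hyd).
have A2 : Cmod (cint g 0 y) <= Rabs (y - 0) * M.
  apply: cint_bound. exact: ccont_cex. move=> x Hx. apply: HM.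
  move: Hx; rewrite /Rmin /Rmax; case: Rle_dec => _; lra.
have A3 : Rabs (y - 0) * M <= eps / 2.
  rewrite Rminus_0_r Rabs_pos_eq; last lra.
  apply: Rle_trans (_ : y * M <= y * (M + 1)) _. apply: Rmult_le_compat_l; lra.
  have E : eps / (2 * (M + 1)) * (M + 1) = eps / 2 by field; lra.
  apply: Rle_trans (_ : y * (M + 1) <= eps / (2 * (M + 1)) * (M + 1)) _.
    apply: Rmult_le_compat_r; lra.
  lra.
lra.
Qed.

Unset Implicit Arguments. Set Strict Implicit.

Theorem mainTheorem1 (d : nat) (h : Mat d) (F : Mat d -> Mat d)
  (B : R -> Mat d -> Mat d) (hh : R -> Mat d)
  (A N : R -> Mat d -> Mat d) :
  hermitian h ->
  CP F ->
  (forall t, 0 <= t -> CP (B t)) ->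
  (forall t, 0 <= t -> hermitian (hh t)) ->
  (forall a i j, cont_nonneg (fun t => B t a i j)) ->
  (forall i j, cont_nonneg (fun t => hh t i j)) ->
  is_solution (Lgen h F) (fun t a => madd (B t a) (Zgen (hh t) (B t) a)) A ->
  is_solution (Lgen h F) (fun t => Zgen (hh t) (B t)) N ->
  (forall t, 0 <= t -> CP (N t)) ->
  forall t, 0 <= t -> CP (A t).
Proof.
move=> _ HF HBcp _ HBc Hhc [HA0 [HAc HAd]] [HN0 [HNc HNd]] HNcp t Ht.
have Hrg : forall s, 0 <= Rmax 0 s by move=> s; exact: Rmax_l.
pose B' := fun s => B (Rmax 0 s).
pose hh' := fun s => hh (Rmax 0 s).
pose N' := fun s => N (Rmax 0 s).
pose A' := fun s => A (Rmax 0 s).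
pose Z' := fun s => Zgen (hh' s) (B' s).
pose L := Lgen h F.
have HL : is_linear_map L by apply: Lgen_lin; case: HF.
have HB'cp : forall s, CP (B' s) by move=> s; exact: HBcp.
have HN'cp : forall s, CP (N' s) by move=> s; exact: HNcp.
have HB'l : linfam B' by move=> s; case: (HB'cp s).
have HN'l : linfam N' by move=> s; case: (HN'cp s).
have HB'c : opcont B' by move=> x i j; exact: (@reg_cont (fun s => B s x i j) (HBc x i j)).
have HN'c : opcont N' by move=> x i j; exact: (@reg_cont (fun s => N s x i j) (HNc x i j)).
have HA'c : forall a, mcont (fun s => A' s a) by move=> a i j; exact: (@reg_cont (fun s => A s a i j) (HAc a i j)).
have Hhh'c : mcont hh' by move=> i j; exact: (@reg_cont (fun s => hh s i j) (Hhc i j)).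
have HZ'l : linfam Z' by move=> s; exact: Zgen_lin.
have HZ'c : opcont Z'.
  move=> x. rewrite /Z' /Zgen /anticomm /comm.
  apply: mcont_add; apply: mcont_scale; apply: mcont_add.
  - apply: mcont_mmul. exact: HB'c. exact: mcont_const.
  - apply: mcont_mmul. exact: mcont_const. exact: HB'c.
  - apply: mcont_mmul. exact: Hhh'c. exact: mcont_const.
  - apply: mcont_scale. apply: mcont_mmul. exact: mcont_const. exact: Hhh'c.
have HIN : IntN L Z' N'.
  move=> x s Hs. apply: mat_ext => i j.
  rewrite /N' (Rmax_right 0 s Hs).
  rewrite (@deriv_to_int (fun r => N r x i j) (fun r => Lam L Z' N' r x i j) s) //.
  - by rewrite HN0 /madd /mint.
  - exact: (Lam_cont HL HZ'l HZ'c HN'l HN'c x i j).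
  - move=> r Hr. have := HNd r Hr x i j.
    have -> : Lam L Z' N' r x i j = Cplus (Lgen h F (N r x) i j) (RInt (V := C_R_CompleteNormedModule) (fun q => Zgen (hh (r - q)) (B (r - q)) (N q x) i j) 0 r).
      rewrite /Lam /madd /L /N' (Rmax_right 0 r); last lra. f_equal.
      rewrite /mconv /mint /cint. apply: (RInt_ext (V:=C_R_CompleteNormedModule)) => q Hq.
      have Hq' : 0 < q < r by move: Hq; rewrite /Rmin /Rmax; case: Rle_dec => _; lra.
      rewrite /Z' /hh' /B' !Rmax_right //; lra.
    done.
pose K := fun s x => madd (B' s x) (Z' s x).
have HKl : linfam K by move=> s; exact: add_lin.
have HKc : opcont K by move=> x; apply: mcont_add; [exact: HB'c | exact: HZ'c].
have IA : forall a s, 0 <= s -> A' s a = madd a (mint (fun q => madd (L (A' q a))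
        (mint (fun r => madd (B' (q - r) (A' r a)) (Z' (q - r) (A' r a))) 0 q)) 0 s).
  move=> a s Hs. apply: mat_ext => i j.
  rewrite /A' (Rmax_right 0 s Hs).
  rewrite (@deriv_to_int (fun r => A r a i j) (fun q => madd (L (A' q a)) (mconv K (fun r => A' r a) q) i j) s) //.
  - by rewrite HA0 /madd /mint.
  - apply: (ccont_plus (f := fun q => L (A' q a) i j) (g := fun q => mconv K (fun r => A' r a) q i j)).
    + exact: (@mcont_app d (fun _ => L) (fun q => A' q a) (fun _ => HL) (fun z => mcont_const (L z)) (HA'c a) i j).
    + exact: (mcont_conv HKl HKc (HA'c a) i j).
  - move=> r Hr. have := HAd r Hr a i j.
    have -> : madd (L (A' r a)) (mconv K (fun q => A' q a) r) i j = Cplus (Lgen h F (A r a) i j) (RInt (V := C_R_CompleteNormedModule) (fun q => madd (B (r - q) (A q a)) (Zgen (hh (r - q)) (B (r - q)) (A q a)) i j) 0 r).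
      rewrite /madd /L /A' (Rmax_right 0 r); last lra. f_equal.
      rewrite /mconv /mint /cint. apply: (RInt_ext (V:=C_R_CompleteNormedModule)) => q Hq.
      have Hq' : 0 < q < r by move: Hq; rewrite /Rmin /Rmax; case: Rle_dec => _; lra.
      rewrite /K /Z' /hh' /B' /madd !Rmax_right //; lra.
    done.
have := core HL HZ'l HZ'c HB'l HB'c HN'l HN'c HB'cp HN'cp HA'c IA HIN Ht.
by rewrite /A' (Rmax_right 0 t Ht).
Qed.
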